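(* In the standing setup, let $y_0\in P$ and let $J$ be a $q$-periodic interval of $F_{y_0}$ with midpoint $c$; let $X^*=\{T_0^k(c,y_0)\}_{k=0}^{q-1}$ be the corresponding symmetric periodic orbit of $T_0$. Let $\gamma_A,\gamma_B$ each be one of the curves $y\mapsto(0,y)$, $y\mapsto(\tfrac12,y)$ (type $0$) or $y\mapsto(m_i(y),y)$ for some $i$ (type $-1$), and let $n_A,n_B\ge 0$ be integers; set $j_A=2n_A$ if $\gamma_A$ is of type $0$ and $j_A=2n_A-1$ if of type $-1$, and similarly $j_B$, and assume $|j_A-j_B|=q$. Suppose there are $y_A,y_B\in P$ with $T_0^{n_A}(\gamma_A(y_A))=T_0^{n_B}(\gamma_B(y_B))=p^*\in X^*$; that for $0\le k<n_A$ the index of the elemental subinterval containing the $x$-coordinate of $T_\varepsilon^k(\gamma_A(y))$ is locally constant in $(y,\varepsilon)$ near $(y_A,0)$, and similarly for $B$ near $(y_B,0)$; and that the tangent vectors $\frac{d}{dy}T_0^{n_A}(\gamma_A(y))|_{y=y_A}$ and $\frac{d}{dy}T_0^{n_B}(\gamma_B(y))|_{y=y_B}$ are linearly independent. Then there exist $\varepsilon_0>0$ and a neighborhood $U$ of $p^*$ such that for all $|\varepsilon|<\varepsilon_0$ the curves $y\mapsto T_\varepsilon^{n_A}(\gamma_A(y))$ and $y\mapsto T_\varepsilon^{n_B}(\gamma_B(y))$ (for $y$ near $y_A$, resp. $y_B$) intersect in $U$ in exactly one point $p_\varepsilon$; $p_\varepsilon$ depends continuously on $\varepsilon$ with $p_0=p^*$,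 and $p_\varepsilon$ lies on a symmetric periodic orbit of $T_\varepsilon$ of minimal period $q$.
   Context: Standing setup (perturbed symmetric FIEM): identify $[0,1)$ with $\mathbb{S}^1=\mathbb{R}/\mathbb{Z}$. Fix $d\ge 2$ and an open interval $P\subset\mathbb{R}$. For $y\in P$ let $\lambda(y)=(\lambda_1(y),\dots,\lambda_d(y))$ with $\lambda_i(y)>0$, $\sum_i\lambda_i(y)=1$, each $\lambda_i$ smooth. Put $a_i(y)=\sum_{j<i}\lambda_j(y)$, elemental subintervals $J_i(y)=[a_i(y),a_i(y)+\lambda_i(y))$, midpoints $m_i(y)=a_i(y)+\lambda_i(y)/2$, and $\omega_i(y)=\sum_{j>i}\lambda_j(y)-\sum_{j<i}\lambda_j(y)$ (so $m_i=(1-\omega_i)/2$). The symmetric $d$-IEM is $F_y(x)=x+\omega_i(y)$ for $x\in J_i(y)$. Let $R(x)=-x\bmod 1$ and let $f$ be a smooth $1$-periodic odd function. For $\varepsilon\in\mathbb{R}$, $T_\varepsilon(x,y)=(F_y(x),\,y+\varepsilon f(F_y(x)))$ on $\mathbb{S}^1\times P$ (where defined), $S_\varepsilon(x,y)=(R(x),\,y-\varepsilon f(x))$, and the symmetry lines are $\Gamma_i=\{p: T_\varepsilon^i(S_\varepsilon(p))=p\}$. A $q$-periodic interval of an IEM $F$ is a left-closed right-open interval $J$ such that $q$ is the least positive integer with $F^q(J)=J$, each $F^k(J)$ lies in a single elemental subinterval, and $J$ is maximal with these properties. A periodic orbit $\mathcal{O}$ of $T_\varepsilon$ is symmetric if $S_\varepsilon(\mathcal{O})=\mathcal{O}$.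 *)

(* Defs.v *)
From Stdlib Require Import Reals Lra ZArith.
From Coquelicot Require Import Coquelicot.
Open Scope R_scope.

(* Points of S^1 x P are pairs (x,y) of reals; the x-coordinate is always
   represented in [0,1) (all maps below land in [0,1) in the x-coordinate). *)

Definition inP (pa pb : Rbar) (y : R) : Prop := Rbar_lt pa y /\ Rbar_lt y pb.

Fixpoint psum (g : nat -> R) (n : nat) : R :=
  match n with O => 0 | S n' => psum g n' + g n' end.

Section IEM.
Variable d : nat.
Variable lambda : nat -> R -> R.   (* lambda i y, for i = 0 .. d-1 *)

Definition a_ (i : nat) (y : R) : R := psum (fun j => lambda j y) i.
Definition m_ (i : nat) (y : R) : R := a_ i y + lambda i y / 2.
Definition omega_ (i : nat) (y : R) : R :=
  (psum (fun j => lambda j y) d - psum (fun j => lambda j y) (S i)) - a_ i y.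

Definition inJ (i : nat) (y x : R) : Prop := a_ i y <= x < a_ i y + lambda i y.

Definition inJb (i : nat) (y x : R) : bool :=
  if Rle_dec (a_ i y) x then
    if Rlt_dec x (a_ i y + lambda i y) then true else false
  else false.

(* The symmetric d-IEM F_y(x) = x + omega_i(y) for x in J_i(y), read on
   the circle R/Z (input and output reduced to [0,1)). *)
Definition F (y x : R) : R :=
  let x' := frac_part x in
  frac_part (x' + psum (fun i => if inJb i y x' then omega_ i y else 0) d).

Definition T (f : R -> R) (eps : R) (p : R * R) : R * R :=
  let x1 := F (snd p) (fst p) in (x1, snd p + eps * f x1).

Definition Ssym (f : R -> R) (eps : R) (p : R * R) : R * R :=
  (frac_part (- fst p), snd p - eps * f (fst p)).

Definition in_elem (i : nat) (p : R * R) : Prop := (i < d)%nat /\ inJ i (snd p) (fst p).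

Definition inI (l r x : R) : Prop := l <= x < r.

Definition periodic_interval_props (y : R) (q : nat) (l r : R) : Prop :=
  l < r /\ (0 < q)%nat /\
  (forall z, inI l r z <-> exists x, inI l r x /\ Nat.iter q (F y) x = z) /\
  (forall k, (0 < k < q)%nat ->
     ~ (forall z, inI l r z <-> exists x, inI l r x /\ Nat.iter k (F y) x = z)) /\
  (forall k, exists i, (i < d)%nat /\
     forall x, inI l r x -> inJ i y (Nat.iter k (F y) x)).

Definition periodic_interval (y : R) (q : nat) (l r : R) : Prop :=
  periodic_interval_props y q l r /\
  (forall l' r', l' <= l -> r <= r' -> periodic_interval_props y q l' r' ->
     l' = l /\ r' = r).

End IEM.

(* Curves: type 0 : y |-> (0,y), y |-> (1/2,y); type -1 : y |-> (m_i(y), y). *)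
Inductive curve : Set := cur_zero | cur_half | cur_mid (i : nat).

Definition valid_curve (d : nat) (c : curve) : Prop :=
  match c with cur_mid i => (i < d)%nat | _ => True end.

Definition gamma (lambda : nat -> R -> R) (c : curve) (y : R) : R * R :=
  match c with
  | cur_zero => (0, y)
  | cur_half => (1/2, y)
  | cur_mid i => (m_ lambda i y, y)
  end.

Definition jval (c : curve) (n : nat) : Z :=
  match c with
  | cur_mid _ => (2 * Z.of_nat n - 1)%Z
  | _ => (2 * Z.of_nat n)%Z
  end.

Definition smooth_on (P : R -> Prop) (g : R -> R) : Prop :=
  forall n y, P y -> ex_derive_n g n y.

Definition sym_periodic_orbit (Tm Sm : R * R -> R * R) (P : R -> Prop)
  (q : nat) (p : R * R) : Prop :=
  (0 < q)%nat /\ Nat.iter q Tm p = p /\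
  (forall k, (0 < k < q)%nat -> Nat.iter k Tm p <> p) /\
  (forall k, P (snd (Nat.iter k Tm p))) /\
  (forall k, exists j, Sm (Nat.iter k Tm p) = Nat.iter j Tm p) /\
  (forall k, exists j, Nat.iter k Tm p = Sm (Nat.iter j Tm p)).

(* Main.v *)
Require Import Defs.
From Stdlib Require Import Reals Lra Lia ZArith Arith IndefiniteDescription.
From Coquelicot Require Import Coquelicot.
Open Scope R_scope.

Section Basic.
Variables (d : nat) (lambda : nat -> R -> R) (pa pb : Rbar).
Hypothesis Hpos : forall i y, (i < d)%nat -> inP pa pb y -> 0 < lambda i y.
Hypothesis Hsum : forall y, inP pa pb y -> psum (fun i => lambda i y) d = 1.

Lemma a_0 y : a_ lambda 0 y = 0.
Proof. reflexivity. Qed.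
Lemma a_S i y : a_ lambda (S i) y = a_ lambda i y + lambda i y.
Proof. reflexivity. Qed.
Lemma a_d y : inP pa pb y -> a_ lambda d y = 1.
Proof. intros; apply Hsum; auto. Qed.

Lemma a_le y : inP pa pb y -> forall n m, (n <= m)%nat -> (m <= d)%nat ->
  a_ lambda n y <= a_ lambda m y.
Proof.
  intros Py n m Hnm Hm. induction m as [|m IH].
  - assert (n = 0)%nat by lia; subst; lra.
  - destruct (Nat.eq_dec n (S m)) as [->|Hne]; [lra|].
    rewrite a_S. assert (0 < lambda m y) by (apply Hpos; auto; lia).
    assert (a_ lambda n y <= a_ lambda m y) by (apply IH; lia). lra.
Qed.

Lemma a_lt y : inP pa pb y -> forall n m, (n < m)%nat -> (m <= d)%nat ->
  a_ lambda n y < a_ lambda m y.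
Proof.
  intros Py n m Hnm Hm. destruct m as [|m]; [lia|].
  rewrite a_S. assert (0 < lambda m y) by (apply Hpos; auto; lia).
  assert (a_ lambda n y <= a_ lambda m y) by (apply a_le; auto; lia). lra.
Qed.

Lemma a_nonneg y i : inP pa pb y -> (i <= d)%nat -> 0 <= a_ lambda i y.
Proof. intros. rewrite <- (a_0 y). apply a_le; auto; lia. Qed.

Lemma omega_eq y i : inP pa pb y ->
  omega_ d lambda i y = 1 - 2 * a_ lambda i y - lambda i y.
Proof.
  intros Py. unfold omega_. rewrite Hsum by auto.
  change (psum (fun j => lambda j y) (S i)) with (a_ lambda (S i) y).
  rewrite a_S. lra.
Qed.

Lemma J_range y i x : inP pa pb y -> (i < d)%nat -> inJ lambda i y x ->
  0 <= a_ lambda i y /\ a_ lambda i y + lambda i y <= 1 /\ 0 < lambda i y.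
Proof.
  intros Py Hi HJ. split; [apply a_nonneg; auto; lia|]. split.
  - rewrite <- a_S, <- (a_d y Py). apply a_le; auto; lia.
  - apply Hpos; auto.
Qed.

Lemma J_disj y i j x : inP pa pb y -> (i < d)%nat -> (j < d)%nat ->
  inJ lambda i y x -> inJ lambda j y x -> i = j.
Proof.
  intros Py Hi Hj [H1 H2] [H3 H4].
  destruct (Nat.lt_trichotomy i j) as [Hlt|[Heq|Hlt]]; auto.
  - assert (a_ lambda (S i) y <= a_ lambda j y) by (apply a_le; auto; lia).
    rewrite a_S in H. lra.
  - assert (a_ lambda (S j) y <= a_ lambda i y) by (apply a_le; auto; lia).
    rewrite a_S in H. lra.
Qed.

Lemma J_cover y x : inP pa pb y -> 0 <= x < 1 -> exists i, (i < d)%nat /\ inJ lambda i y x.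
Proof.
  intros Py Hx.
  assert (forall n, (n <= d)%nat -> x < a_ lambda n y -> exists i, (i < n)%nat /\ inJ lambda i y x).
  { induction n as [|n IH]; intros Hn Hlt.
    - rewrite a_0 in Hlt; lra.
    - destruct (Rlt_dec x (a_ lambda n y)) as [Hl|Hl].
      + destruct (IH ltac:(lia) Hl) as [i [Hi1 Hi2]]. exists i; split; auto; lia.
      + exists n; split; [lia|]. rewrite a_S in Hlt. unfold inJ; lra. }
  destruct (H d (Nat.le_refl _)) as [i [Hi1 Hi2]]; [rewrite a_d by auto; lra|].
  exists i; auto.
Qed.

Lemma inJb_iff i y x : inJb lambda i y x = true <-> inJ lambda i y x.
Proof.
  unfold inJb, inJ. destruct (Rle_dec (a_ lambda i y) x); [destruct (Rlt_dec x (a_ lambda i y + lambda i y))|];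
  split; intros; try lra; try discriminate; auto.
Qed.

Lemma psum_ind y i x : inP pa pb y -> (i < d)%nat -> inJ lambda i y x ->
  forall n, (n <= d)%nat ->
  psum (fun j => if inJb lambda j y x then omega_ d lambda j y else 0) n =
  if Nat.ltb i n then omega_ d lambda i y else 0.
Proof.
  intros Py Hi HJ. induction n as [|n IH]; intros Hn; [reflexivity|].
  simpl psum. rewrite IH by lia.
  destruct (Nat.eq_dec n i) as [->|Hne].
  - assert (inJb lambda i y x = true) by (apply inJb_iff; auto). rewrite H.
    destruct (Nat.ltb_spec i i); [lia|]. destruct (Nat.ltb_spec i (S i)); [lra|lia].
  - assert (inJb lambda n y x = false).
    { destruct (inJb lambda n y x) eqn:E; auto. apply inJb_iff in E.
      exfalso; apply Hne; eapply J_disj; eauto; lia. }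
    rewrite H. destruct (Nat.ltb_spec i n); destruct (Nat.ltb_spec i (S n)); try lia; lra.
Qed.

Lemma frac_id x : 0 <= x < 1 -> frac_part x = x.
Proof.
  intros Hx. destruct (Int_part_frac_part_spec x 0 x Hx) as [_ H]; [simpl; lra|]. auto.
Qed.

Lemma frac_neg x : 0 < x < 1 -> frac_part (- x) = 1 - x.
Proof.
  intros Hx. destruct (Int_part_frac_part_spec (-x) (-1) (1 - x)) as [_ H]; [lra|simpl; lra|].
  auto.
Qed.

Lemma frac_neg0 : frac_part (- 0) = 0.
Proof. rewrite Ropp_0. apply frac_id; lra. Qed.

Lemma F_eq y i x : inP pa pb y -> (i < d)%nat -> inJ lambda i y x ->
  F d lambda y x = x + omega_ d lambda i y.
Proof.
  intros Py Hi HJ. pose proof (J_range _ _ _ Py Hi HJ) as [R1 [R2 R3]].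
  destruct HJ as [H1 H2].
  unfold F. rewrite (frac_id x) by lra.
  rewrite psum_ind with (i := i) by (auto; unfold inJ; lra).
  destruct (Nat.ltb_spec i d); [|lia].
  rewrite omega_eq by auto. apply frac_id. lra.
Qed.

Lemma F_range y x : 0 <= F d lambda y x < 1.
Proof. unfold F. destruct (base_fp (frac_part x + psum (fun i : nat => if inJb lambda i y (frac_part x) then omega_ d lambda i y else 0) d)). lra. Qed.

Lemma F_inj y x x' : inP pa pb y -> 0 <= x < 1 -> 0 <= x' < 1 ->
  F d lambda y x = F d lambda y x' -> x = x'.
Proof.
  intros Py Hx Hx' E.
  destruct (J_cover y x Py Hx) as [i [Hi HJ]].
  destruct (J_cover y x' Py Hx') as [j [Hj HJ']].
  rewrite (F_eq y i x) in E by auto. rewrite (F_eq y j x') in E by auto.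
  rewrite !omega_eq in E by auto.
  destruct (Nat.lt_trichotomy i j) as [Hlt|[->|Hlt]].
  - assert (a_ lambda (S i) y <= a_ lambda j y) by (apply a_le; auto; lia).
    rewrite a_S in H. destruct HJ, HJ'. lra.
  - lra.
  - assert (a_ lambda (S j) y <= a_ lambda i y) by (apply a_le; auto; lia).
    rewrite a_S in H. destruct HJ, HJ'. lra.
Qed.

Lemma F_iter_range y x k : 0 <= x < 1 -> 0 <= Nat.iter k (F d lambda y) x < 1.
Proof. intros; destruct k; simpl; auto; apply F_range. Qed.

Lemma F_iter_inj y k x x' : inP pa pb y -> 0 <= x < 1 -> 0 <= x' < 1 ->
  Nat.iter k (F d lambda y) x = Nat.iter k (F d lambda y) x' -> x = x'.
Proof.
  intros Py Hx Hx'. induction k as [|k IH]; simpl; auto.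
  intros E. apply IH. apply F_inj in E; auto; apply F_iter_range; auto.
Qed.

End Basic.

Definition cont1 (h : R -> R) (x : R) : Prop :=
  forall eps, 0 < eps -> exists del, 0 < del /\
    forall z, Rabs (z - x) < del -> Rabs (h z - h x) < eps.

Definition cont2 (g : R -> R -> R) (y e : R) : Prop :=
  forall eps, 0 < eps -> exists del, 0 < del /\
    forall y' e', Rabs (y' - y) < del -> Rabs (e' - e) < del ->
      Rabs (g y' e' - g y e) < eps.

Lemma cont1_of_continuous h x : continuous h x -> cont1 h x.
Proof.
  intros H eps Heps. apply filterlim_locally with (eps := mkposreal eps Heps) in H.
  destruct H as [del Hd]. exists del. split; [apply cond_pos|].
  intros z Hz. apply (Hd z Hz).
Qed.

Lemma cont1_of_ex_derive h x : ex_derive h x -> cont1 h x.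
Proof. intros H; apply cont1_of_continuous. apply (ex_derive_continuous (K:=R_AbsRing) (V:=R_NormedModule) h); auto. Qed.

Lemma locally_of_box (P : R -> Prop) y :
  (exists del, 0 < del /\ forall z, Rabs (z - y) < del -> P z) -> locally y P.
Proof. intros [del [Hd H]]. exists (mkposreal del Hd). intros z Hz. apply H, Hz. Qed.

Lemma continuous_of_cont1 h x : cont1 h x -> continuous h x.
Proof.
  intros H. apply filterlim_locally. intros eps.
  destruct (H eps (cond_pos eps)) as [del [Hd H']].
  apply locally_of_box. exists del; split; auto.
Qed.

Lemma cont2_const c y e : cont2 (fun _ _ => c) y e.
Proof. intros eps Heps; exists 1; split; [lra|]; intros; rewrite Rminus_eq_0, Rabs_R0; auto. Qed.
Lemma cont2_y y e : cont2 (fun y _ => y) y e.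
Proof. intros eps Heps; exists eps; split; [auto|]; intros; rewrite ?Rminus_eq_0, ?Rabs_R0; auto. Qed.
Lemma cont2_e y e : cont2 (fun _ e => e) y e.
Proof. intros eps Heps; exists eps; split; [auto|]; intros; rewrite ?Rminus_eq_0, ?Rabs_R0; auto. Qed.

Lemma cont2_plus g h y e : cont2 g y e -> cont2 h y e -> cont2 (fun y e => g y e + h y e) y e.
Proof.
  intros Hg Hh eps Heps.
  destruct (Hg (eps/2)) as [d1 [Hd1 H1]]; [lra|].
  destruct (Hh (eps/2)) as [d2 [Hd2 H2]]; [lra|].
  exists (Rmin d1 d2); split; [apply Rmin_pos; auto|].
  intros y' e' Hy He.
  assert (Rabs (y'-y) < d1 /\ Rabs (y'-y) < d2) as [Hy1 Hy2] by (pose proof (Rmin_l d1 d2); pose proof (Rmin_r d1 d2); split; lra).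
  assert (Rabs (e'-e) < d1 /\ Rabs (e'-e) < d2) as [He1 He2] by (pose proof (Rmin_l d1 d2); pose proof (Rmin_r d1 d2); split; lra).
  specialize (H1 _ _ Hy1 He1). specialize (H2 _ _ Hy2 He2).
  replace (g y' e' + h y' e' - (g y e + h y e)) with ((g y' e' - g y e) + (h y' e' - h y e)) by ring.
  eapply Rle_lt_trans; [apply Rabs_triang|]. lra.
Qed.

Lemma cont2_opp g y e : cont2 g y e -> cont2 (fun y e => - g y e) y e.
Proof.
  intros Hg eps Heps. destruct (Hg eps Heps) as [del [Hd H]]. exists del; split; auto.
  intros. replace (- g y' e' - - g y e) with (- (g y' e' - g y e)) by ring.
  rewrite Rabs_Ropp; auto.
Qed.

Lemma cont2_minus g h y e : cont2 g y e -> cont2 h y e -> cont2 (fun y e => g y e - h y e) y e.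
Proof. intros; apply cont2_plus; auto; apply cont2_opp; auto. Qed.

Lemma cont2_comp2 (g : R -> R -> R) u v y e :
  cont2 u y e -> cont2 v y e -> cont2 g (u y e) (v y e) ->
  cont2 (fun y e => g (u y e) (v y e)) y e.
Proof.
  intros Hu Hv Hg eps Heps.
  destruct (Hg eps Heps) as [d0 [Hd0 H0]].
  destruct (Hu d0 Hd0) as [d1 [Hd1 H1]].
  destruct (Hv d0 Hd0) as [d2 [Hd2 H2]].
  exists (Rmin d1 d2); split; [apply Rmin_pos; auto|].
  intros y' e' Hy He. pose proof (Rmin_l d1 d2); pose proof (Rmin_r d1 d2).
  apply H0; [apply H1|apply H2]; lra.
Qed.

Lemma cont2_comp (h : R -> R) g y e : cont1 h (g y e) -> cont2 g y e ->
  cont2 (fun y e => h (g y e)) y e.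
Proof.
  intros Hh Hg eps Heps. destruct (Hh eps Heps) as [d0 [Hd0 H0]].
  destruct (Hg d0 Hd0) as [d1 [Hd1 H1]]. exists d1; split; [auto|].
  intros. apply H0, H1; auto.
Qed.

Lemma cont2_mult g h y e : cont2 g y e -> cont2 h y e -> cont2 (fun y e => g y e * h y e) y e.
Proof.
  intros Hg Hh.
  assert (Hm : cont2 (fun a b => a * b) (g y e) (h y e)).
  { intros eps Heps. set (a := g y e). set (b := h y e).
    set (K := Rabs a + Rabs b + 1).
    assert (HK : 0 < K) by (unfold K; pose proof (Rabs_pos a); pose proof (Rabs_pos b); lra).
    exists (Rmin 1 (eps / (4 * K))). split.
    { apply Rmin_pos; [lra|]. apply Rdiv_lt_0_compat; lra. }
    intros a' b' Ha Hb. pose proof (Rmin_l 1 (eps/(4*K))). pose proof (Rmin_r 1 (eps/(4*K))).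
    replace (a' * b' - a * b) with ((a' - a) * b' + a * (b' - b)) by ring.
    eapply Rle_lt_trans; [apply Rabs_triang|]. rewrite !Rabs_mult.
    assert (Rabs b' <= Rabs b + 1).
    { replace b' with (b + (b' - b)) by ring. eapply Rle_trans; [apply Rabs_triang|]. lra. }
    assert (Rabs (a'-a) * Rabs b' <= eps/(4*K) * K).
    { apply Rmult_le_compat; try apply Rabs_pos; try lra. unfold K; pose proof (Rabs_pos a); lra. }
    assert (Rabs a * Rabs (b' - b) <= K * (eps/(4*K))).
    { apply Rmult_le_compat; try apply Rabs_pos; try lra. unfold K; pose proof (Rabs_pos b); lra. }
    assert (eps/(4*K) * K = eps/4) by (field; lra).
    assert (K * (eps/(4*K)) = eps/4) by (field; lra).
    lra. }
  apply (cont2_comp2 (fun a b => a * b)); auto.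
Qed.

Lemma cont2_ext g h y e : (exists del, 0 < del /\ forall y' e', Rabs (y' - y) < del -> Rabs (e' - e) < del -> g y' e' = h y' e') ->
  cont2 h y e -> cont2 g y e.
Proof.
  intros [del [Hd Heq]] Hh eps Heps. destruct (Hh eps Heps) as [d1 [Hd1 H1]].
  exists (Rmin del d1). split; [apply Rmin_pos; auto|]. intros y' e' Hy He.
  pose proof (Rmin_l del d1); pose proof (Rmin_r del d1).
  rewrite !Heq; try (rewrite Rminus_eq_0, Rabs_R0; lra); try lra. apply H1; lra.
Qed.

Lemma cont2_pos g y e : cont2 g y e -> 0 < g y e ->
  exists del, 0 < del /\ forall y' e', Rabs (y' - y) < del -> Rabs (e' - e) < del -> 0 < g y' e'.
Proof.
  intros Hg Hp. destruct (Hg (g y e) Hp) as [del [Hd H]]. exists del; split; auto.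
  intros. specialize (H _ _ H0 H1). apply Rabs_def2 in H. lra.
Qed.

Lemma cont2_e_cont1 g y e : cont2 g y e -> cont1 (fun e => g y e) e.
Proof.
  intros Hg eps Heps. destruct (Hg eps Heps) as [del [Hd H]]. exists del; split; auto.
  intros. apply H; auto. rewrite Rminus_eq_0, Rabs_R0; auto.
Qed.

Lemma cont2_of_cont1 (h : R -> R) y e : cont1 h e -> cont2 (fun _ e => h e) y e.
Proof. intros H eps Heps. destruct (H eps Heps) as [del [Hd H']]. exists del; split; auto. Qed.

Lemma finite_min (Q : nat -> R -> Prop) n :
  (forall j del del', Q j del -> 0 < del' <= del -> Q j del') ->
  (forall j, (j <= n)%nat -> exists del, 0 < del /\ Q j del) ->
  exists del, 0 < del /\ forall j, (j <= n)%nat -> Q j del.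
Proof.
  intros Hmono. induction n as [|n IH]; intros H.
  - destruct (H 0%nat (le_n _)) as [del [Hd Hq]]. exists del; split; auto.
    intros j Hj. assert (j = 0)%nat by lia; subst; auto.
  - destruct IH as [d1 [Hd1 H1]]; [intros; apply H; lia|].
    destruct (H (S n) (le_n _)) as [d2 [Hd2 H2]].
    exists (Rmin d1 d2); split; [apply Rmin_pos; auto|].
    intros j Hj. destruct (Nat.eq_dec j (S n)) as [->|Hne].
    + eapply Hmono; eauto. split; [apply Rmin_pos; auto|apply Rmin_r].
    + eapply Hmono; [apply H1; lia|]. split; [apply Rmin_pos; auto|apply Rmin_l].
Qed.

Lemma inP_open pa pb y : inP pa pb y -> exists del, 0 < del /\ forall z, Rabs (z - y) < del -> inP pa pb z.
Proof.
  intros [H1 H2].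
  assert (exists d1, 0 < d1 /\ forall z, Rabs (z - y) < d1 -> Rbar_lt pa z) as [d1 [Hd1 K1]].
  { destruct pa as [a| |]; simpl in *.
    - exists (y - a); split; [lra|]. intros z Hz. apply Rabs_def2 in Hz. lra.
    - contradiction.
    - exists 1; split; [lra|]; auto. }
  assert (exists d2, 0 < d2 /\ forall z, Rabs (z - y) < d2 -> Rbar_lt z pb) as [d2 [Hd2 K2]].
  { destruct pb as [b| |]; simpl in *.
    - exists (b - y); split; [lra|]. intros z Hz. apply Rabs_def2 in Hz. lra.
    - exists 1; split; [lra|]; auto.
    - contradiction. }
  exists (Rmin d1 d2); split; [apply Rmin_pos; auto|].
  intros z Hz. pose proof (Rmin_l d1 d2); pose proof (Rmin_r d1 d2). split; [apply K1|apply K2]; lra.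
Qed.

Definition C1P (pa pb : Rbar) (g : R -> R) : Prop :=
  forall y, inP pa pb y -> ex_derive g y /\ continuous (Derive g) y.

Lemma C1P_of_smooth pa pb g : smooth_on (inP pa pb) g -> C1P pa pb g.
Proof.
  intros H y Py. split.
  - exact (H 1%nat y Py).
  - apply (ex_derive_continuous (K:=R_AbsRing) (V:=R_NormedModule)). exact (H 2%nat y Py).
Qed.

Lemma C1P_const pa pb c : C1P pa pb (fun _ => c).
Proof.
  intros y Py. split; [apply ex_derive_const|].
  apply continuous_ext with (f := fun _ => 0); [intros; rewrite Derive_const; auto|].
  apply continuous_const.
Qed.

Lemma C1P_plus pa pb g h : C1P pa pb g -> C1P pa pb h -> C1P pa pb (fun x => g x + h x).
Proof.
  intros Hg Hh y Py. destruct (Hg y Py) as [G1 G2]. destruct (Hh y Py) as [H1 H2].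
  split; [apply (ex_derive_plus g h); auto|].
  apply continuous_ext_loc with (g := fun x => Derive g x + Derive h x).
  - apply locally_of_box. destruct (inP_open _ _ _ Py) as [del [Hd HP]]. exists del; split; auto.
    intros z Hz. rewrite Derive_plus; auto; [apply Hg|apply Hh]; auto.
  - apply (continuous_plus (fun x => Derive g x) (fun x => Derive h x)); auto.
Qed.

Lemma C1P_scal pa pb k g : C1P pa pb g -> C1P pa pb (fun x => k * g x).
Proof.
  intros Hg y Py. destruct (Hg y Py) as [G1 G2].
  split; [apply ex_derive_scal; auto|].
  apply continuous_ext with (f := fun x => k * Derive g x).
  - intros; rewrite Derive_scal; auto.
  - apply (continuous_mult (fun _ => k) (fun x => Derive g x)); auto. apply continuous_const.
Qed.

Lemma C1P_cont pa pb g y : C1P pa pb g -> inP pa pb y -> cont1 g y.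
Proof. intros H Py; apply cont1_of_ex_derive, H; auto. Qed.
Lemma C1P_dcont pa pb g y : C1P pa pb g -> inP pa pb y -> cont1 (Derive g) y.
Proof. intros H Py; apply cont1_of_continuous, H; auto. Qed.
Lemma C1P_derive pa pb g y : C1P pa pb g -> inP pa pb y -> is_derive g y (Derive g y).
Proof. intros H Py; apply Derive_correct, H; auto. Qed.

Lemma C1P_ext pa pb g h : (forall y, g y = h y) -> C1P pa pb h -> C1P pa pb g.
Proof.
  intros E H y Py. destruct (H y Py) as [H1 H2]. split.
  - apply (ex_derive_ext h); auto.
  - apply continuous_ext with (f := Derive h); [intros; apply Derive_ext; auto|auto].
Qed.

Section Smooth.
Variables (d : nat) (lambda : nat -> R -> R) (pa pb : Rbar).
Hypothesis Hsm : forall i, (i < d)%nat -> smooth_on (inP pa pb) (lambda i).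

Lemma C1_lambda i : (i < d)%nat -> C1P pa pb (lambda i).
Proof. intros; apply C1P_of_smooth; auto. Qed.

Lemma C1_psum n : (n <= d)%nat -> C1P pa pb (fun y => psum (fun j => lambda j y) n).
Proof.
  induction n as [|n IH]; intros Hn.
  - exact (C1P_const pa pb 0).
  - simpl. apply (C1P_plus _ _ (fun y => psum (fun j => lambda j y) n) (lambda n)).
    apply IH; lia. apply C1_lambda; lia.
Qed.

Lemma C1_a i : (i <= d)%nat -> C1P pa pb (a_ lambda i).
Proof. intros; apply C1_psum; auto. Qed.

Lemma C1_omega i : (i < d)%nat -> C1P pa pb (omega_ d lambda i).
Proof.
  intros Hi. apply C1P_ext with (h := fun y => (psum (fun j => lambda j y) d + (-1) * psum (fun j => lambda j y) (S i)) + (-1) * a_ lambda i y).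
  { intros; unfold omega_; ring. }
  apply (C1P_plus _ _ (fun y => psum (fun j => lambda j y) d + (-1) * psum (fun j => lambda j y) (S i))
                      (fun y => (-1) * a_ lambda i y)).
  - apply (C1P_plus _ _ (fun y => psum (fun j => lambda j y) d) (fun y => (-1) * psum (fun j => lambda j y) (S i))).
    + apply C1_psum; lia.
    + apply C1P_scal, C1_psum; lia.
  - apply C1P_scal, C1_a; lia.
Qed.

Lemma C1_m i : (i < d)%nat -> C1P pa pb (m_ lambda i).
Proof.
  intros Hi. apply C1P_ext with (h := fun y => a_ lambda i y + (/2) * lambda i y).
  { intros; unfold m_; field. }
  apply (C1P_plus _ _ (a_ lambda i) (fun y => (/2) * lambda i y)).
  - apply C1_a; lia.
  - apply C1P_scal, C1_lambda; auto.
Qed.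
End Smooth.

Lemma cont2_y_cont1 g y e : cont2 g y e -> cont1 (fun y => g y e) y.
Proof.
  intros Hg eps Heps. destruct (Hg eps Heps) as [del [Hd H]]. exists del; split; auto.
  intros. apply H; auto. rewrite Rminus_eq_0, Rabs_R0; auto.
Qed.

Lemma cont1_cont2 h x : cont1 h x -> cont2 (fun a _ => h a) x 0.
Proof. intros H eps Heps. destruct (H eps Heps) as [del [Hd H']]. exists del; split; auto. Qed.

Lemma cont1_plus g h x : cont1 g x -> cont1 h x -> cont1 (fun z => g z + h z) x.
Proof.
  intros Hg Hh. apply (cont2_y_cont1 (fun a _ => g a + h a) x 0).
  apply cont2_plus; apply cont1_cont2; auto.
Qed.
Lemma cont1_minus g h x : cont1 g x -> cont1 h x -> cont1 (fun z => g z - h z) x.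
Proof.
  intros Hg Hh. apply (cont2_y_cont1 (fun a _ => g a - h a) x 0).
  apply cont2_minus; apply cont1_cont2; auto.
Qed.
Lemma cont1_mult g h x : cont1 g x -> cont1 h x -> cont1 (fun z => g z * h z) x.
Proof.
  intros Hg Hh. apply (cont2_y_cont1 (fun a _ => g a * h a) x 0).
  apply cont2_mult; apply cont1_cont2; auto.
Qed.
Lemma cont1_const c x : cont1 (fun _ => c) x.
Proof. intros eps Heps; exists 1; split; [lra|]; intros; rewrite Rminus_eq_0, Rabs_R0; auto. Qed.
Lemma cont1_id x : cont1 (fun z => z) x.
Proof. intros eps Heps; exists eps; split; auto. Qed.

Lemma cont1_comp_y (G : R -> R -> R) u y e : cont2 G (u y) e -> cont1 u y ->
  cont1 (fun y => G (u y) e) y.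
Proof.
  intros HG Hu eps Heps. destruct (HG eps Heps) as [d0 [Hd0 H0]].
  destruct (Hu d0 Hd0) as [d1 [Hd1 H1]]. exists d1; split; auto.
  intros. apply H0; auto. rewrite Rminus_eq_0, Rabs_R0; auto.
Qed.

Lemma cont1_comp_e (G : R -> R -> R) u e : cont2 G (u e) e -> cont1 u e ->
  cont1 (fun e => G (u e) e) e.
Proof.
  intros HG Hu eps Heps. destruct (HG eps Heps) as [d0 [Hd0 H0]].
  destruct (Hu d0 Hd0) as [d1 [Hd1 H1]]. exists (Rmin d0 d1); split; [apply Rmin_pos; auto|].
  intros z Hz. pose proof (Rmin_l d0 d1); pose proof (Rmin_r d0 d1). apply H0; [apply H1|]; lra.
Qed.

Lemma cont1_comp (h g : R -> R) x : cont1 g x -> cont1 h (g x) -> cont1 (fun z => h (g z)) x.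
Proof.
  intros Hg Hh eps Heps. destruct (Hh eps Heps) as [d0 [Hd0 H0]].
  destruct (Hg d0 Hd0) as [d1 [Hd1 H1]]. exists d1; split; auto.
Qed.

Definition incr (g : R -> R) (c s m : R) := forall z w, c - s <= z -> z < w -> w <= c + s ->
  m * (w - z) <= g w - g z.

Lemma root_exists g c s m : 0 < s -> 0 < m -> incr g c s m ->
  (forall z, c - s <= z <= c + s -> cont1 g z) -> Rabs (g c) < m * s ->
  exists z, Rabs (z - c) < s /\ g z = 0.
Proof.
  intros Hs Hm Hi Hc Hg.
  assert (H1 : m * (c - (c - s)) <= g c - g (c - s)) by (apply Hi; lra).
  assert (H2 : m * (c + s - c) <= g (c + s) - g c) by (apply Hi; lra).
  apply Rabs_def2 in Hg.
  destruct (Ranalysis5.IVT_interv g (c - s) (c + s)) as [z [Hz1 Hz2]].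
  - intros a Ha. apply continuity_pt_filterlim. apply continuous_of_cont1, Hc; auto.
  - lra.
  - nra.
  - nra.
  - exists z; split; auto. apply Rabs_def1.
    + destruct (Req_dec z (c + s)); [subst; nra|lra].
    + destruct (Req_dec z (c - s)); [subst; nra|lra].
Qed.

Lemma root_unique g c s m z z' : 0 < m -> incr g c s m ->
  c - s <= z <= c + s -> c - s <= z' <= c + s -> g z = 0 -> g z' = 0 -> z = z'.
Proof.
  intros Hm Hi Hz Hz' E E'.
  destruct (Rtotal_order z z') as [Hl|[He|Hl]]; auto.
  - specialize (Hi z z' ltac:(lra) Hl ltac:(lra)). nra.
  - specialize (Hi z' z ltac:(lra) Hl ltac:(lra)). nra.
Qed.

Lemma root_cont (g : R -> R -> R) (rt : R -> R) t0 c s m del0 : 0 < m -> 0 < del0 ->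
  (forall t, Rabs (t - t0) < del0 -> incr (g t) c s m /\ Rabs (rt t - c) < s /\ g t (rt t) = 0) ->
  (forall z, c - s <= z <= c + s -> cont1 (fun t => g t z) t0) -> cont1 rt t0.
Proof.
  intros Hm Hd0 H Hc eps Heps.
  destruct (H t0) as [Hi0 [Hr0 Hg0]]; [rewrite Rminus_eq_0, Rabs_R0; auto|].
  apply Rabs_def2 in Hr0.
  set (e' := Rmin (eps/2) (Rmin ((c + s - rt t0)/2) ((rt t0 - (c - s))/2))).
  assert (He'1 : 0 < e') by (unfold e'; repeat apply Rmin_pos; lra).
  assert (He'2 : e' <= eps/2) by apply Rmin_l.
  assert (He'3 : e' <= (c + s - rt t0)/2) by (eapply Rle_trans; [apply Rmin_r|apply Rmin_l]).
  assert (He'4 : e' <= (rt t0 - (c - s))/2) by (eapply Rle_trans; [apply Rmin_r|apply Rmin_r]).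
  assert (Gp : m * e' <= g t0 (rt t0 + e')).
  { specialize (Hi0 (rt t0) (rt t0 + e') ltac:(lra) ltac:(lra) ltac:(lra)). lra. }
  assert (Gn : g t0 (rt t0 - e') <= - (m * e')).
  { specialize (Hi0 (rt t0 - e') (rt t0) ltac:(lra) ltac:(lra) ltac:(lra)).
    replace (rt t0 - (rt t0 - e')) with e' in Hi0 by ring. lra. }
  assert (Hme : 0 < m * e') by nra.
  destruct (Hc (rt t0 + e') ltac:(lra) (m * e') Hme) as [d1 [Hd1 K1]].
  destruct (Hc (rt t0 - e') ltac:(lra) (m * e') Hme) as [d2 [Hd2 K2]].
  exists (Rmin del0 (Rmin d1 d2)). split; [repeat apply Rmin_pos; auto|].
  intros t Ht. pose proof (Rmin_l del0 (Rmin d1 d2)). pose proof (Rmin_r del0 (Rmin d1 d2)).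
  pose proof (Rmin_l d1 d2). pose proof (Rmin_r d1 d2).
  specialize (K1 t ltac:(lra)). specialize (K2 t ltac:(lra)).
  apply Rabs_def2 in K1. apply Rabs_def2 in K2.
  destruct (H t ltac:(lra)) as [Hi [Hr Hg]]. apply Rabs_def2 in Hr.
  apply Rabs_def1.
  - destruct (Rlt_dec (rt t) (rt t0 + e')) as [Hl|Hl]; [lra|].
    exfalso. destruct (Req_dec (rt t) (rt t0 + e')) as [Ee|Ne].
    + rewrite Ee in Hg. lra.
    + specialize (Hi (rt t0 + e') (rt t) ltac:(lra) ltac:(lra) ltac:(lra)). nra.
  - destruct (Rlt_dec (rt t0 - e') (rt t)) as [Hl|Hl]; [lra|].
    exfalso. destruct (Req_dec (rt t) (rt t0 - e')) as [Ee|Ne].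
    + rewrite Ee in Hg. lra.
    + specialize (Hi (rt t) (rt t0 - e') ltac:(lra) ltac:(lra) ltac:(lra)). nra.
Qed.

Lemma mvt2 (g dg : R -> R) u v :
  (forall z, Rmin u v <= z <= Rmax u v -> is_derive g z (dg z)) ->
  exists xi, Rmin u v <= xi <= Rmax u v /\ g v - g u = dg xi * (v - u).
Proof.
  intros H. destruct (MVT_gen g u v dg) as [xi [H1 H2]].
  - intros; apply H; lra.
  - intros x Hx. apply continuity_pt_filterlim.
    apply (ex_derive_continuous (K:=R_AbsRing) (V:=R_NormedModule)).
    exists (dg x); apply H; auto.
  - exists xi; auto.
Qed.

Lemma between_box c Rr u v xi : Rabs (u - c) < Rr -> Rabs (v - c) < Rr ->
  Rmin u v <= xi <= Rmax u v -> Rabs (xi - c) < Rr.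
Proof.
  intros Hu Hv Hx. apply Rabs_def2 in Hu. apply Rabs_def2 in Hv.
  unfold Rmin, Rmax in Hx. apply Rabs_def1; destruct (Rle_dec u v); lra.
Qed.
Lemma ineq_core uA uB eta A1 A2 B1 B2 D H :
  0 < eta -> eta <= 1/2 -> eta * (8 * (1 + Rabs uB)) <= Rabs (uA - uB) ->
  Rabs (A1 - uA) < eta -> Rabs (A2 - 1) < eta -> Rabs (B1 - uB) < eta -> Rabs (B2 - 1) < eta ->
  B2 * H = A2 * D -> 0 < D ->
  Rabs (uA - uB) / 2 * D <= (if Rlt_dec uB uA then 1 else -1) * (A1 * D - B1 * H).
Proof.
  intros He1 He2 He3 HA1 HA2 HB1 HB2 EH HD.
  apply Rabs_def2 in HA1; apply Rabs_def2 in HA2; apply Rabs_def2 in HB1; apply Rabs_def2 in HB2.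
  assert (HB2p : 0 < B2) by lra.
  assert (EH' : H = A2 * D / B2) by (field_simplify; [|lra]; rewrite <- EH; field; lra).
  set (X := A1 - B1 * A2 / B2).
  assert (EX : A1 * D - B1 * H = X * D) by (unfold X; rewrite EH'; field; lra).
  rewrite EX.
  assert (Hnum : Rabs (B1 * A2 - uB * B2) <= eta * (3/2) + Rabs uB * (2 * eta)).
  { replace (B1 * A2 - uB * B2) with ((B1 - uB) * A2 + uB * (A2 - B2)) by ring.
    eapply Rle_trans; [apply Rabs_triang|]. rewrite !Rabs_mult.
    apply Rplus_le_compat.
    - apply Rmult_le_compat; try apply Rabs_pos.
      + apply Rlt_le, Rabs_def1; lra.
      + apply Rabs_le; lra.
    - apply Rmult_le_compat_l; [apply Rabs_pos|]. apply Rabs_le; lra. }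
  assert (Hq : Rabs (B1 * A2 / B2 - uB) <= 2 * (eta * (3/2) + Rabs uB * (2 * eta))).
  { replace (B1 * A2 / B2 - uB) with ((B1 * A2 - uB * B2) / B2) by (field; lra).
    unfold Rdiv. rewrite Rabs_mult, Rabs_inv, (Rabs_right B2) by lra.
    apply Rle_trans with (Rabs (B1 * A2 - uB * B2) * 2).
    - apply Rmult_le_compat_l; [apply Rabs_pos|]. apply Rle_trans with (/ (1/2)).
      + apply Rinv_le_contravar; lra.
      + lra.
    - lra. }
  assert (HX : Rabs (X - (uA - uB)) <= Rabs (uA - uB) / 2).
  { unfold X. replace (A1 - B1 * A2 / B2 - (uA - uB)) with ((A1 - uA) - (B1 * A2 / B2 - uB)) by ring.
    eapply Rle_trans; [apply Rabs_triang|]. rewrite Rabs_Ropp.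
    assert (Rabs (A1 - uA) <= eta) by (apply Rabs_le; lra).
    pose proof (Rabs_pos uB). nra. }
  pose proof (Rle_abs (X - (uA - uB))) as HX1. pose proof (Rle_abs (- (X - (uA - uB)))) as HX2. rewrite Rabs_Ropp in HX2.
  destruct (Rlt_dec uB uA).
  - rewrite (Rabs_right (uA - uB)) in HX |- * by lra. assert (X >= (uA - uB)/2) by lra. nra.
  - rewrite (Rabs_left1 (uA - uB)) in HX |- * by lra. assert (X <= (uA - uB)/2) by lra. nra.
Qed.

Section Core1.
Variables (a1 a2 b1 b2 da1 da2 db1 db2 : R -> R -> R) (yA yB uA uB eta r1 : R).
Hypothesis Hr1 : 0 < r1.
Hypothesis HA : forall y e, Rabs (y - yA) < r1 -> Rabs e < r1 ->
  is_derive (fun z => a1 z e) y (da1 y e) /\ is_derive (fun z => a2 z e) y (da2 y e) /\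
  cont2 a1 y e /\ cont2 a2 y e /\ Rabs (da1 y e - uA) < eta /\ Rabs (da2 y e - 1) < eta.
Hypothesis HB : forall y e, Rabs (y - yB) < r1 -> Rabs e < r1 ->
  is_derive (fun z => b1 z e) y (db1 y e) /\ is_derive (fun z => b2 z e) y (db2 y e) /\
  cont2 b1 y e /\ cont2 b2 y e /\ Rabs (db1 y e - uB) < eta /\ Rabs (db2 y e - 1) < eta.
Hypothesis Heta : 0 < eta /\ eta <= 1/2 /\ eta * (8 * (1 + Rabs uB)) <= Rabs (uA - uB).
Hypothesis H01 : a1 yA 0 = b1 yB 0.
Hypothesis H02 : a2 yA 0 = b2 yB 0.

Let s := r1 / 2.

Lemma s_pos : 0 < s.
Proof. unfold s; lra. Qed.

Lemma mvtB2 e u v : Rabs e < r1 -> Rabs (u - yB) < r1 -> Rabs (v - yB) < r1 ->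
  exists xi, Rabs (xi - yB) < r1 /\ b2 v e - b2 u e = db2 xi e * (v - u).
Proof.
  intros He Hu Hv.
  assert (Hd : forall z, Rmin u v <= z <= Rmax u v -> is_derive (fun z => b2 z e) z (db2 z e)).
  { intros z Hz. assert (Rabs (z - yB) < r1) by (apply (between_box yB r1 u v z Hu Hv Hz)).
    destruct (HB z e) as [D1 [D2 _]]; auto. }
  destruct (mvt2 (fun z => b2 z e) (fun z => db2 z e) u v Hd) as [xi [Hx E]].
  exists xi; split; auto. apply (between_box _ r1 u v xi Hu Hv Hx).
Qed.
Lemma mvtB1 e u v : Rabs e < r1 -> Rabs (u - yB) < r1 -> Rabs (v - yB) < r1 ->
  exists xi, Rabs (xi - yB) < r1 /\ b1 v e - b1 u e = db1 xi e * (v - u).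
Proof.
  intros He Hu Hv.
  assert (Hd : forall z, Rmin u v <= z <= Rmax u v -> is_derive (fun z => b1 z e) z (db1 z e)).
  { intros z Hz. assert (Rabs (z - yB) < r1) by (apply (between_box yB r1 u v z Hu Hv Hz)).
    destruct (HB z e) as [D1 [D2 _]]; auto. }
  destruct (mvt2 (fun z => b1 z e) (fun z => db1 z e) u v Hd) as [xi [Hx E]].
  exists xi; split; auto. apply (between_box _ r1 u v xi Hu Hv Hx).
Qed.
Lemma mvtA2 e u v : Rabs e < r1 -> Rabs (u - yA) < r1 -> Rabs (v - yA) < r1 ->
  exists xi, Rabs (xi - yA) < r1 /\ a2 v e - a2 u e = da2 xi e * (v - u).
Proof.
  intros He Hu Hv.
  assert (Hd : forall z, Rmin u v <= z <= Rmax u v -> is_derive (fun z => a2 z e) z (da2 z e)).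
  { intros z Hz. assert (Rabs (z - yA) < r1) by (apply (between_box yA r1 u v z Hu Hv Hz)).
    destruct (HA z e) as [D1 [D2 _]]; auto. }
  destruct (mvt2 (fun z => a2 z e) (fun z => da2 z e) u v Hd) as [xi [Hx E]].
  exists xi; split; auto. apply (between_box _ r1 u v xi Hu Hv Hx).
Qed.
Lemma mvtA1 e u v : Rabs e < r1 -> Rabs (u - yA) < r1 -> Rabs (v - yA) < r1 ->
  exists xi, Rabs (xi - yA) < r1 /\ a1 v e - a1 u e = da1 xi e * (v - u).
Proof.
  intros He Hu Hv.
  assert (Hd : forall z, Rmin u v <= z <= Rmax u v -> is_derive (fun z => a1 z e) z (da1 z e)).
  { intros z Hz. assert (Rabs (z - yA) < r1) by (apply (between_box yA r1 u v z Hu Hv Hz)).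
    destruct (HA z e) as [D1 [D2 _]]; auto. }
  destruct (mvt2 (fun z => a1 z e) (fun z => da1 z e) u v Hd) as [xi [Hx E]].
  exists xi; split; auto. apply (between_box _ r1 u v xi Hu Hv Hx).
Qed.

Lemma abs_le_s z : Rabs (z - yB) <= s -> Rabs (z - yB) < r1.
Proof. unfold s; intros; lra. Qed.

Lemma closed_abs z c rr : c - rr <= z <= c + rr -> Rabs (z - c) <= rr.
Proof. intros; apply Rabs_le; lra. Qed.

Lemma psi_incr y1 e : Rabs e < r1 -> incr (fun z => b2 z e - a2 y1 e) yB s (1/2).
Proof.
  intros He z w Hz Hzw Hw. pose proof s_pos.
  destruct (mvtB2 e z w He) as [xi [Hxi E]].
  - apply abs_le_s, closed_abs; lra.
  - apply abs_le_s, closed_abs; lra.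
  - destruct (HB xi e Hxi He) as [_ [_ [_ [_ [_ K]]]]]. apply Rabs_def2 in K.
    destruct Heta as [? [? ?]]. nra.
Qed.

Lemma psi_cont y1 e z : Rabs e < r1 -> Rabs (z - yB) <= s -> cont1 (fun z => b2 z e - a2 y1 e) z.
Proof.
  intros He Hz. apply cont1_minus; [|apply cont1_const].
  apply cont2_y_cont1. apply HB; auto. apply abs_le_s; auto.
Qed.

Lemma t_exists : exists t, 0 < t /\ t <= s /\ forall y1 e, Rabs (y1 - yA) < t -> Rabs e < t ->
  Rabs (b2 yB e - a2 y1 e) < (1/2) * s.
Proof.
  pose proof s_pos.
  destruct (HB yB 0) as [_ [_ [_ [Cb _]]]]; [rewrite Rminus_eq_0, Rabs_R0; lra|rewrite Rabs_R0; lra|].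
  destruct (HA yA 0) as [_ [_ [_ [Ca _]]]]; [rewrite Rminus_eq_0, Rabs_R0; lra|rewrite Rabs_R0; lra|].
  destruct (Cb (s/4)) as [d1 [Hd1 K1]]; [lra|].
  destruct (Ca (s/4)) as [d2 [Hd2 K2]]; [lra|].
  exists (Rmin s (Rmin d1 d2)). split; [repeat apply Rmin_pos; auto|]. split; [apply Rmin_l|].
  intros y1 e Hy He. pose proof (Rmin_l s (Rmin d1 d2)). pose proof (Rmin_r s (Rmin d1 d2)).
  pose proof (Rmin_l d1 d2). pose proof (Rmin_r d1 d2).
  specialize (K1 yB e ltac:(rewrite Rminus_eq_0, Rabs_R0; lra) ltac:(rewrite Rminus_0_r; lra)).
  specialize (K2 y1 e ltac:(lra) ltac:(rewrite Rminus_0_r; lra)).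
  rewrite H02 in K2.
  replace (b2 yB e - a2 y1 e) with ((b2 yB e - b2 yB 0) - (a2 y1 e - b2 yB 0)) by ring.
  eapply Rle_lt_trans; [apply Rabs_triang|]. rewrite Rabs_Ropp. lra.
Qed.

Section Core2.
Variable t : R.
Hypothesis Ht : 0 < t /\ t <= s /\ forall y1 e, Rabs (y1 - yA) < t -> Rabs e < t ->
  Rabs (b2 yB e - a2 y1 e) < (1/2) * s.

Lemma t_lt_r1 : t < r1.
Proof. unfold s in Ht. lra. Qed.

Lemma h_ex y1 e : exists z, (Rabs (y1 - yA) < t -> Rabs e < t -> Rabs (z - yB) < s /\ b2 z e = a2 y1 e).
Proof.
  destruct (Rlt_dec (Rabs (y1 - yA)) t) as [Hy|Hy]; [|exists 0; intros; contradiction].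
  destruct (Rlt_dec (Rabs e) t) as [He|He]; [|exists 0; intros; contradiction].
  pose proof t_lt_r1. pose proof s_pos.
  destruct (root_exists (fun z => b2 z e - a2 y1 e) yB s (1/2)) as [z [Hz1 Hz2]]; auto; try lra.
  - apply psi_incr; lra.
  - intros z Hz. apply psi_cont; [lra|apply closed_abs; lra].
  - apply Ht; auto.
  - exists z. intros; split; auto; lra.
Qed.

Definition h y1 e := proj1_sig (constructive_indefinite_description _ (h_ex y1 e)).

Lemma h_spec y1 e : Rabs (y1 - yA) < t -> Rabs e < t -> Rabs (h y1 e - yB) < s /\ b2 (h y1 e) e = a2 y1 e.
Proof. unfold h. destruct (constructive_indefinite_description _ _) as [z Hz]; simpl; auto. Qed.

Lemma h_unique y1 e z : Rabs (y1 - yA) < t -> Rabs e < t -> Rabs (z - yB) <= s -> b2 z e = a2 y1 e -> z = h y1 e.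
Proof.
  intros Hy He Hz E. destruct (h_spec y1 e Hy He) as [H1 H2]. pose proof t_lt_r1.
  apply Rabs_le_between' in Hz. apply Rabs_def2 in H1.
  apply (root_unique (fun z => b2 z e - a2 y1 e) yB s (1/2)); try lra.
  apply psi_incr; lra.
Qed.

Lemma h_diff e y1 y1' : Rabs (y1 - yA) < t -> Rabs (y1' - yA) < t -> Rabs e < t ->
  exists xi zeta, Rabs (xi - yA) < r1 /\ Rabs (zeta - yB) < r1 /\
    da2 xi e * (y1' - y1) = db2 zeta e * (h y1' e - h y1 e).
Proof.
  intros Hy Hy' He. pose proof t_lt_r1. pose proof s_pos.
  destruct (h_spec y1 e Hy He) as [K1 K2]. destruct (h_spec y1' e Hy' He) as [K3 K4].
  destruct (mvtA2 e y1 y1') as [xi [Hxi E1]]; try lra.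
  destruct (mvtB2 e (h y1 e) (h y1' e)) as [zeta [Hz E2]]; try (unfold s in *; lra).
  exists xi, zeta. split; auto. split; auto. rewrite <- E1, <- E2, K2, K4. ring.
Qed.

Lemma h_lip e y1 y1' : Rabs (y1 - yA) < t -> Rabs (y1' - yA) < t -> Rabs e < t ->
  Rabs (h y1' e - h y1 e) <= 3 * Rabs (y1' - y1).
Proof.
  intros Hy Hy' He. pose proof t_lt_r1.
  destruct (h_diff e y1 y1' Hy Hy' He) as [xi [zeta [Hxi [Hz E]]]].
  destruct (HA xi e Hxi ltac:(lra)) as [_ [_ [_ [_ [_ Ka]]]]].
  destruct (HB zeta e Hz ltac:(lra)) as [_ [_ [_ [_ [_ Kb]]]]].
  apply Rabs_def2 in Ka. apply Rabs_def2 in Kb. destruct Heta as [? [? ?]].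
  assert (E' : Rabs (da2 xi e) * Rabs (y1' - y1) = Rabs (db2 zeta e) * Rabs (h y1' e - h y1 e))
    by (rewrite <- !Rabs_mult, E; auto).
  rewrite (Rabs_right (da2 xi e)) in E' by lra. rewrite (Rabs_right (db2 zeta e)) in E' by lra.
  pose proof (Rabs_pos (y1' - y1)). pose proof (Rabs_pos (h y1' e - h y1 e)). nra.
Qed.

Lemma h_cont_y e y1 : Rabs (y1 - yA) < t -> Rabs e < t -> cont1 (fun y => h y e) y1.
Proof.
  intros Hy He eps Heps. exists (Rmin (eps/3) (t - Rabs (y1 - yA))). split.
  { apply Rmin_pos; lra. }
  intros z Hz. pose proof (Rmin_l (eps/3) (t - Rabs (y1 - yA))). pose proof (Rmin_r (eps/3) (t - Rabs (y1 - yA))).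
  assert (Rabs (z - yA) < t).
  { replace (z - yA) with ((z - y1) + (y1 - yA)) by ring. eapply Rle_lt_trans; [apply Rabs_triang|]. lra. }
  pose proof (h_lip e y1 z Hy H1 He). lra.
Qed.

Lemma h_cont_e e y1 : Rabs (y1 - yA) < t -> Rabs e < t -> cont1 (fun e => h y1 e) e.
Proof.
  intros Hy He. pose proof t_lt_r1. pose proof s_pos.
  apply (root_cont (fun t' z => b2 z t' - a2 y1 t') (fun t' => h y1 t') e yB s (1/2) (t - Rabs e)); try lra.
  - intros t' Ht'. assert (Rabs t' < t).
    { replace t' with ((t' - e) + e) by ring. eapply Rle_lt_trans; [apply Rabs_triang|]. lra. }
    destruct (h_spec y1 t' Hy H1) as [K1 K2]. split; [apply psi_incr; lra|]. split; auto. lra.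
  - intros z Hz. apply cont1_minus.
    + apply (cont2_e_cont1 b2 z e). apply HB; [|lra]. apply abs_le_s, closed_abs; auto.
    + apply (cont2_e_cont1 a2 y1 e). apply HA; lra.
Qed.

Let sg := if Rlt_dec uB uA then 1 else -1.
Let K := Rabs (uA - uB).
Definition phi y e := sg * (a1 y e - b1 (h y e) e).
Let s' := t / 2.

Lemma K_pos : 0 < K.
Proof. unfold K. destruct Heta as [? [? ?]]. pose proof (Rabs_pos uB). nra. Qed.

Lemma sg_nz : sg <> 0.
Proof. unfold sg; destruct (Rlt_dec uB uA); lra. Qed.

Lemma phi_incr e : Rabs e < t -> incr (fun y => phi y e) yA s' (K / 2).
Proof.
  intros He z w Hz Hzw Hw. pose proof t_lt_r1. pose proof s_pos. unfold s' in *.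
  assert (Hz' : Rabs (z - yA) < t) by (apply Rabs_def1; lra).
  assert (Hw' : Rabs (w - yA) < t) by (apply Rabs_def1; lra).
  destruct (mvtA1 e z w) as [x1 [Hx1 E1]]; try lra.
  destruct (h_diff e z w Hz' Hw' He) as [x2 [zeta [Hx2 [Hzeta E2]]]].
  destruct (h_spec z e Hz' He) as [K1 _]. destruct (h_spec w e Hw' He) as [K3 _].
  destruct (mvtB1 e (h z e) (h w e)) as [zeta' [Hzeta' E3]]; try (unfold s in *; lra).
  destruct (HA x1 e Hx1 ltac:(lra)) as [_ [_ [_ [_ [A1 _]]]]].
  destruct (HA x2 e Hx2 ltac:(lra)) as [_ [_ [_ [_ [_ A2]]]]].
  destruct (HB zeta' e Hzeta' ltac:(lra)) as [_ [_ [_ [_ [B1 _]]]]].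
  destruct (HB zeta e Hzeta ltac:(lra)) as [_ [_ [_ [_ [_ B2]]]]].
  destruct Heta as [Ha [Hb Hc]].
  pose proof (ineq_core uA uB eta (da1 x1 e) (da2 x2 e) (db1 zeta' e) (db2 zeta e) (w - z) (h w e - h z e)
     Ha Hb Hc A1 A2 B1 B2 ltac:(rewrite <- E2; ring) ltac:(lra)) as I.
  unfold phi. fold sg in I. fold K in I.
  replace (sg * (a1 w e - b1 (h w e) e) - sg * (a1 z e - b1 (h z e) e))
    with (sg * ((a1 w e - a1 z e) - (b1 (h w e) e - b1 (h z e) e))) by ring.
  rewrite E1, E3. lra.
Qed.

Lemma phi_cont_y e y : Rabs e < t -> Rabs (y - yA) < t -> cont1 (fun y => phi y e) y.
Proof.
  intros He Hy. pose proof t_lt_r1. unfold phi.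
  apply (cont1_mult (fun _ => sg) (fun y => a1 y e - b1 (h y e) e)); [apply cont1_const|].
  apply (cont1_minus (fun y => a1 y e) (fun y => b1 (h y e) e)).
  - apply cont2_y_cont1. apply HA; lra.
  - apply (cont1_comp_y b1 (fun y => h y e)).
    + destruct (h_spec y e Hy He) as [K1 _]. apply HB; unfold s in *; lra.
    + apply h_cont_y; auto.
Qed.

Lemma phi_cont_e e y : Rabs e < t -> Rabs (y - yA) < t -> cont1 (fun e => phi y e) e.
Proof.
  intros He Hy. pose proof t_lt_r1. unfold phi.
  apply (cont1_mult (fun _ => sg) (fun e => a1 y e - b1 (h y e) e)); [apply cont1_const|].
  apply (cont1_minus (fun e => a1 y e) (fun e => b1 (h y e) e)).
  - apply (cont2_e_cont1 a1 y e). apply HA; lra.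
  - apply (cont1_comp_e b1 (fun e => h y e)).
    + destruct (h_spec y e Hy He) as [K1 _]. apply HB; unfold s in *; lra.
    + apply h_cont_e; auto.
Qed.

Lemma h0 : h yA 0 = yB.
Proof.
  pose proof s_pos. pose proof t_lt_r1.
  symmetry. apply h_unique; try (rewrite ?Rminus_eq_0, ?Rabs_R0; lra); auto.
Qed.

Lemma phi0 : phi yA 0 = 0.
Proof. unfold phi. rewrite h0, H01. ring. Qed.

Lemma eps0_exists : exists eps0, 0 < eps0 /\ eps0 <= t /\ forall e, Rabs e < eps0 -> Rabs (phi yA e) < K / 2 * s'.
Proof.
  pose proof K_pos. assert (0 < s') by (unfold s'; lra).
  assert (HKs : 0 < K / 2 * s') by (apply Rmult_lt_0_compat; lra).
  destruct (phi_cont_e 0 yA ltac:(rewrite Rabs_R0; lra) ltac:(rewrite Rminus_eq_0, Rabs_R0; lra) _ HKs) as [del [Hd Hdel]].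
  exists (Rmin del t). split; [apply Rmin_pos; lra|]. split; [apply Rmin_r|].
  intros e He. pose proof (Rmin_l del t). specialize (Hdel e ltac:(rewrite Rminus_0_r; lra)).
  rewrite phi0, Rminus_0_r in Hdel. auto.
Qed.

Section Core3.
Variable eps0 : R.
Hypothesis Heps0 : 0 < eps0 /\ eps0 <= t /\ forall e, Rabs e < eps0 -> Rabs (phi yA e) < K / 2 * s'.

Lemma y1_ex e : exists z, (Rabs e < eps0 -> Rabs (z - yA) < s' /\ phi z e = 0).
Proof.
  destruct (Rlt_dec (Rabs e) eps0) as [He|He]; [|exists 0; intros; contradiction].
  pose proof K_pos. assert (0 < s') by (unfold s'; lra).
  destruct (root_exists (fun y => phi y e) yA s' (K/2)) as [z [Hz1 Hz2]]; auto; try lra.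
  - apply phi_incr; lra.
  - intros z Hz. apply phi_cont_y; [lra|]. apply Rabs_def1; unfold s' in *; lra.
  - apply Heps0; auto.
  - exists z; auto.
Qed.

Definition y1f e := proj1_sig (constructive_indefinite_description _ (y1_ex e)).
Definition y2f e := h (y1f e) e.

Lemma y1f_spec e : Rabs e < eps0 -> Rabs (y1f e - yA) < s' /\ phi (y1f e) e = 0.
Proof. unfold y1f. destruct (constructive_indefinite_description _ _) as [z Hz]; simpl; auto. Qed.

Lemma core3 : y1f 0 = yA /\ y2f 0 = yB /\ forall e, Rabs e < eps0 ->
  Rabs (y1f e - yA) < s' /\ Rabs (y2f e - yB) < s /\
  a1 (y1f e) e = b1 (y2f e) e /\ a2 (y1f e) e = b2 (y2f e) e /\
  (forall z z', Rabs (z - yA) < s' -> Rabs (z' - yB) < s -> a1 z e = b1 z' e -> a2 z e = b2 z' e ->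
     z = y1f e /\ z' = y2f e) /\ cont1 y1f e.
Proof.
  pose proof K_pos. assert (Hs' : 0 < s') by (unfold s'; lra). pose proof t_lt_r1. pose proof s_pos.
  assert (Hs't : s' < t) by (unfold s'; lra).
  assert (Y0 : y1f 0 = yA).
  { destruct (y1f_spec 0) as [K1 K2]; [rewrite Rabs_R0; lra|].
    apply Rabs_def2 in K1.
    apply (root_unique (fun y => phi y 0) yA s' (K/2)); try lra.
    - apply phi_incr; rewrite Rabs_R0; lra.
    - apply phi0. }
  split; auto. split; [unfold y2f; rewrite Y0; apply h0|].
  intros e He.
  destruct (y1f_spec e He) as [K1 K2].
  assert (Hyt : Rabs (y1f e - yA) < t) by lra.
  assert (Het : Rabs e < t) by lra.
  destruct (h_spec (y1f e) e Hyt Het) as [K3 K4].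
  split; auto. split; [unfold y2f; auto|].
  assert (E1 : a1 (y1f e) e = b1 (y2f e) e).
  { unfold phi in K2. pose proof sg_nz. unfold y2f.
    apply Rmult_integral in K2. destruct K2; [contradiction|lra]. }
  split; auto. split; [unfold y2f; auto|].
  split.
  - intros z z' Hz Hz' Ez Ez'.
    assert (Hzt : Rabs (z - yA) < t) by lra.
    assert (Ez'h : z' = h z e) by (apply h_unique; auto; lra).
    assert (z = y1f e).
    { apply Rabs_def2 in Hz. apply Rabs_def2 in K1.
      apply (root_unique (fun y => phi y e) yA s' (K/2)); try lra.
      - apply phi_incr; auto.
      - unfold phi. rewrite <- Ez'h, Ez. ring. }
    split; auto. subst z. rewrite Ez'h. reflexivity.
  - apply (root_cont (fun t' z => phi z t') y1f e yA s' (K/2) (eps0 - Rabs e)); try lra.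
    + intros t' Ht'. assert (Ht0 : Rabs t' < eps0).
      { replace t' with ((t' - e) + e) by ring. eapply Rle_lt_trans; [apply Rabs_triang|]. lra. }
      destruct (y1f_spec t' Ht0) as [L1 L2]. split; [apply phi_incr; lra|]. split; auto.
    + intros z Hz. apply phi_cont_e; auto. apply Rabs_def1; lra.
Qed.
End Core3.
End Core2.
End Core1.

Lemma core_full (a1 a2 b1 b2 da1 da2 db1 db2 : R -> R -> R) (yA yB r rho : R) :
  0 < r -> 0 < rho ->
  (forall y e, Rabs (y - yA) < r -> Rabs e < r ->
    is_derive (fun z => a1 z e) y (da1 y e) /\ is_derive (fun z => a2 z e) y (da2 y e) /\
    cont2 a1 y e /\ cont2 a2 y e) ->
  (forall y e, Rabs (y - yB) < r -> Rabs e < r ->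
    is_derive (fun z => b1 z e) y (db1 y e) /\ is_derive (fun z => b2 z e) y (db2 y e) /\
    cont2 b1 y e /\ cont2 b2 y e) ->
  cont2 da1 yA 0 -> cont2 da2 yA 0 -> da2 yA 0 = 1 ->
  cont2 db1 yB 0 -> cont2 db2 yB 0 -> db2 yB 0 = 1 ->
  da1 yA 0 <> db1 yB 0 ->
  a1 yA 0 = b1 yB 0 -> a2 yA 0 = b2 yB 0 ->
  exists eps0 dA dB (y1 y2 : R -> R), 0 < eps0 /\ eps0 <= rho /\ 0 < dA /\ dA <= rho /\
    0 < dB /\ dB <= rho /\ y1 0 = yA /\ y2 0 = yB /\
    forall e, Rabs e < eps0 ->
      Rabs (y1 e - yA) < dA /\ Rabs (y2 e - yB) < dB /\
      a1 (y1 e) e = b1 (y2 e) e /\ a2 (y1 e) e = b2 (y2 e) e /\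
      (forall z z', Rabs (z - yA) < dA -> Rabs (z' - yB) < dB -> a1 z e = b1 z' e -> a2 z e = b2 z' e ->
         z = y1 e /\ z' = y2 e) /\ cont1 y1 e.
Proof.
  intros Hr Hrho HA HB C1 C2 E2 D1 D2 F2 Hne H01 H02.
  set (uA := da1 yA 0). set (uB := db1 yB 0).
  assert (HK : 0 < Rabs (uA - uB)) by (apply Rabs_pos_lt; unfold uA, uB; lra).
  pose proof (Rabs_pos uB).
  set (eta := Rmin (1/2) (Rabs (uA - uB) / (8 * (1 + Rabs uB)))).
  assert (Heta0 : 0 < eta) by (unfold eta; apply Rmin_pos; [lra|apply Rdiv_lt_0_compat; lra]).
  assert (Heta : 0 < eta /\ eta <= 1/2 /\ eta * (8 * (1 + Rabs uB)) <= Rabs (uA - uB)).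
  { split; auto. split; [apply Rmin_l|].
    assert (eta <= Rabs (uA - uB) / (8 * (1 + Rabs uB))) by apply Rmin_r.
    apply Rmult_le_reg_r with (/ (8 * (1 + Rabs uB))); [apply Rinv_0_lt_compat; lra|].
    replace (eta * (8 * (1 + Rabs uB)) * / (8 * (1 + Rabs uB))) with eta by (field; lra). auto. }
  destruct (C1 eta Heta0) as [d1 [Hd1 K1]]. destruct (C2 eta Heta0) as [d2 [Hd2 K2]].
  destruct (D1 eta Heta0) as [d3 [Hd3 K3]]. destruct (D2 eta Heta0) as [d4 [Hd4 K4]].
  set (r1 := Rmin (Rmin r rho) (Rmin (Rmin d1 d2) (Rmin d3 d4))).
  assert (Hr1 : 0 < r1) by (unfold r1; repeat apply Rmin_pos; auto).
  assert (Hr1a : r1 <= r /\ r1 <= rho /\ r1 <= d1 /\ r1 <= d2 /\ r1 <= d3 /\ r1 <= d4).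
  { unfold r1. pose proof (Rmin_l (Rmin r rho) (Rmin (Rmin d1 d2) (Rmin d3 d4))).
    pose proof (Rmin_r (Rmin r rho) (Rmin (Rmin d1 d2) (Rmin d3 d4))).
    pose proof (Rmin_l r rho). pose proof (Rmin_r r rho).
    pose proof (Rmin_l (Rmin d1 d2) (Rmin d3 d4)). pose proof (Rmin_r (Rmin d1 d2) (Rmin d3 d4)).
    pose proof (Rmin_l d1 d2). pose proof (Rmin_r d1 d2). pose proof (Rmin_l d3 d4). pose proof (Rmin_r d3 d4).
    repeat split; lra. }
  destruct Hr1a as [R1 [R2 [R3 [R4 [R5 R6]]]]].
  assert (HA' : forall y e, Rabs (y - yA) < r1 -> Rabs e < r1 ->
    is_derive (fun z => a1 z e) y (da1 y e) /\ is_derive (fun z => a2 z e) y (da2 y e) /\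
    cont2 a1 y e /\ cont2 a2 y e /\ Rabs (da1 y e - uA) < eta /\ Rabs (da2 y e - 1) < eta).
  { intros y e Hy He. destruct (HA y e) as [X1 [X2 [X3 X4]]]; try lra.
    split; [auto|split; [auto|split; [auto|split; [auto|split]]]].
    - apply K1; rewrite ?Rminus_0_r; lra.
    - rewrite <- E2. apply K2; rewrite ?Rminus_0_r; lra. }
  assert (HB' : forall y e, Rabs (y - yB) < r1 -> Rabs e < r1 ->
    is_derive (fun z => b1 z e) y (db1 y e) /\ is_derive (fun z => b2 z e) y (db2 y e) /\
    cont2 b1 y e /\ cont2 b2 y e /\ Rabs (db1 y e - uB) < eta /\ Rabs (db2 y e - 1) < eta).
  { intros y e Hy He. destruct (HB y e) as [X1 [X2 [X3 X4]]]; try lra.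
    split; [auto|split; [auto|split; [auto|split; [auto|split]]]].
    - apply K3; rewrite ?Rminus_0_r; lra.
    - rewrite <- F2. apply K4; rewrite ?Rminus_0_r; lra. }
  destruct (t_exists a1 a2 b1 b2 da1 da2 db1 db2 yA yB uA uB eta r1 Hr1 HA' HB' H02) as [t Ht].
  destruct (eps0_exists a1 a2 b1 b2 da1 da2 db1 db2 yA yB uA uB eta r1 Hr1 HA' HB' Heta H01 H02 t Ht) as [eps0 Heps0].
  destruct (core3 a1 a2 b1 b2 da1 da2 db1 db2 yA yB uA uB eta r1 Hr1 HA' HB' Heta H01 H02 t Ht eps0 Heps0) as [Y1 [Y2 Hc]].
  exists eps0, (t/2), (r1/2).
  eexists. eexists.
  pose proof Ht as Htc. pose proof Heps0 as Hec. destruct Htc as [Ht1 [Ht2 _]]. destruct Hec as [He1 [He2 _]].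
  split; auto. split; [lra|]. split; [lra|]. split; [lra|]. split; [lra|]. split; [lra|].
  split; [apply Y1|]. split; [apply Y2|]. apply Hc.
Qed.

Lemma is_derive_eq (g : R -> R) x l l' : is_derive g x l -> l = l' -> is_derive g x l'.
Proof. intros H ->; auto. Qed.

Section Curve.
Variables (d : nat) (lambda : nat -> R -> R) (pa pb : Rbar) (f : R -> R).
Hypothesis Hsm : forall i, (i < d)%nat -> smooth_on (inP pa pb) (lambda i).
Hypothesis Hpos : forall i y, (i < d)%nat -> inP pa pb y -> 0 < lambda i y.
Hypothesis Hsum : forall y, inP pa pb y -> psum (fun i => lambda i y) d = 1.
Hypothesis Hf : forall n x, ex_derive_n f n x.
Variables (x0 dx0 : R -> R) (is : nat -> nat).
Hypothesis Hx0 : forall y, inP pa pb y -> is_derive x0 y (dx0 y) /\ cont1 x0 y /\ cont1 dx0 y.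
Hypothesis His : forall k, (is k < d)%nat.

Let om k y := omega_ d lambda (is k) y.

Fixpoint XY (k : nat) (y e : R) : R * R :=
  match k with
  | O => (x0 y, y)
  | S k => let x' := fst (XY k y e) + om k (snd (XY k y e)) in
           (x', snd (XY k y e) + e * f x')
  end.
Definition X k y e := fst (XY k y e).
Definition Y k y e := snd (XY k y e).

Lemma X_S k y e : X (S k) y e = X k y e + om k (Y k y e).
Proof. reflexivity. Qed.
Lemma Y_S k y e : Y (S k) y e = Y k y e + e * f (X (S k) y e).
Proof. reflexivity. Qed.
Lemma X_0 y e : X 0 y e = x0 y.
Proof. reflexivity. Qed.
Lemma Y_0 y e : Y 0 y e = y.
Proof. reflexivity. Qed.

Fixpoint DXY (k : nat) (y e : R) : R * R :=
  match k with
  | O => (dx0 y, 1)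
  | S k => let dx := fst (DXY k y e) + Derive (om k) (Y k y e) * snd (DXY k y e) in
           (dx, snd (DXY k y e) + e * (Derive f (X (S k) y e) * dx))
  end.
Definition DX k y e := fst (DXY k y e).
Definition DY k y e := snd (DXY k y e).
Lemma DX_S k y e : DX (S k) y e = DX k y e + Derive (om k) (Y k y e) * DY k y e.
Proof. reflexivity. Qed.
Lemma DY_S k y e : DY (S k) y e = DY k y e + e * (Derive f (X (S k) y e) * DX (S k) y e).
Proof. reflexivity. Qed.

Lemma Y_e0 k y : Y k y 0 = y.
Proof. induction k as [|k IH]; auto. rewrite Y_S, IH. ring. Qed.
Lemma DY_e0 k y : DY k y 0 = 1.
Proof. induction k as [|k IH]; auto. rewrite DY_S, IH. ring. Qed.

Lemma C1om k : C1P pa pb (om k).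
Proof. apply C1_omega; auto. Qed.

Lemma f_derive x : is_derive f x (Derive f x).
Proof. apply Derive_correct. exact (Hf 1%nat x). Qed.
Lemma f_cont x : cont1 f x.
Proof. apply cont1_of_ex_derive. exact (Hf 1%nat x). Qed.
Lemma df_cont x : cont1 (Derive f) x.
Proof. apply cont1_of_ex_derive. exact (Hf 2%nat x). Qed.

Lemma XY_deriv k y e : (forall j, (j <= k)%nat -> inP pa pb (Y j y e)) ->
  is_derive (fun z => X k z e) y (DX k y e) /\ is_derive (fun z => Y k z e) y (DY k y e).
Proof.
  induction k as [|k IH]; intros HP.
  - split.
    + apply Hx0. apply (HP 0%nat); lia.
    + apply is_derive_ext with (f := fun z => z); [intros; reflexivity|].
      apply is_derive_eq with (l := one); [apply (is_derive_id (K := R_AbsRing))|reflexivity].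
  - destruct IH as [IX IY]; [intros; apply HP; lia|].
    assert (PY : inP pa pb (Y k y e)) by (apply HP; lia).
    assert (DXk : is_derive (fun z => X (S k) z e) y (DX (S k) y e)).
    { apply is_derive_ext with (f := fun z => X k z e + om k (Y k z e)); [intros; reflexivity|].
      apply is_derive_eq with (l := plus (DX k y e) (scal (DY k y e) (Derive (om k) (Y k y e)))).
      - apply (is_derive_plus (fun z => X k z e) (fun z => om k (Y k z e))); auto.
        apply (is_derive_comp (om k) (fun z => Y k z e)); auto.
        apply C1P_derive with (pa := pa) (pb := pb); auto. apply C1om.
      - rewrite DX_S. unfold plus, scal; simpl. unfold mult; simpl. ring. }
    split; auto.
    apply is_derive_ext with (f := fun z => Y k z e + e * f (X (S k) z e)); [intros; reflexivity|].
    apply is_derive_eq with (l := plus (DY k y e) (e * scal (DX (S k) y e) (Derive f (X (S k) y e)))).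
    + apply (is_derive_plus (fun z => Y k z e) (fun z => e * f (X (S k) z e))); auto.
      apply is_derive_scal.
      apply (is_derive_comp f (fun z => X (S k) z e)); auto. apply f_derive.
    + rewrite DY_S. unfold plus, scal; simpl. unfold mult; simpl. ring.
Qed.

Lemma XY_cont k y e : (forall j, (j <= k)%nat -> inP pa pb (Y j y e)) ->
  cont2 (X k) y e /\ cont2 (Y k) y e /\ cont2 (DX k) y e /\ cont2 (DY k) y e.
Proof.
  induction k as [|k IH]; intros HP.
  - assert (P0 : inP pa pb y) by (apply (HP 0%nat); lia).
    destruct (Hx0 y P0) as [_ [C1 C2]].
    split; [apply cont2_ext with (h := fun y e => x0 ((fun y (_:R) => y) y e)); [exists 1; split; [lra|]; intros; reflexivity|];
            apply (cont2_comp x0 (fun y _ => y)); [auto|apply cont2_y]|].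
    split; [apply cont2_ext with (h := fun y (_:R) => y); [exists 1; split; [lra|]; intros; reflexivity|apply cont2_y]|].
    split; [apply cont2_ext with (h := fun y e => dx0 ((fun y (_:R) => y) y e)); [exists 1; split; [lra|]; intros; reflexivity|];
            apply (cont2_comp dx0 (fun y _ => y)); [auto|apply cont2_y]|].
    apply cont2_ext with (h := fun (_ _ : R) => 1); [exists 1; split; [lra|]; intros; reflexivity|apply cont2_const].
  - destruct IH as [CX [CY [CDX CDY]]]; [intros; apply HP; lia|].
    assert (PY : inP pa pb (Y k y e)) by (apply HP; lia).
    assert (CXS : cont2 (X (S k)) y e).
    { apply cont2_ext with (h := fun y e => X k y e + om k (Y k y e)).
      { exists 1; split; [lra|]; intros; reflexivity. }
      apply cont2_plus; auto. apply (cont2_comp (om k) (Y k)); auto.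
      apply C1P_cont with (pa := pa) (pb := pb); auto. apply C1om. }
    assert (CDXS : cont2 (DX (S k)) y e).
    { apply cont2_ext with (h := fun y e => DX k y e + Derive (om k) (Y k y e) * DY k y e).
      { exists 1; split; [lra|]; intros; reflexivity. }
      apply cont2_plus; auto. apply (cont2_mult (fun y e => Derive (om k) (Y k y e))); auto.
      apply (cont2_comp (Derive (om k)) (Y k)); auto.
      apply C1P_dcont with (pa := pa) (pb := pb); auto. apply C1om. }
    split; auto. split.
    + apply cont2_ext with (h := fun y e => Y k y e + e * f (X (S k) y e)).
      { exists 1; split; [lra|]; intros; reflexivity. }
      apply cont2_plus; auto. apply (cont2_mult (fun _ e => e)); [apply cont2_e|].
      apply (cont2_comp f (X (S k))); auto. apply f_cont.
    + split; auto.
      apply cont2_ext with (h := fun y e => DY k y e + e * (Derive f (X (S k) y e) * DX (S k) y e)).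
      { exists 1; split; [lra|]; intros; reflexivity. }
      apply cont2_plus; auto. apply (cont2_mult (fun _ e => e)); [apply cont2_e|].
      apply (cont2_mult (fun y e => Derive f (X (S k) y e))); auto.
      apply (cont2_comp (Derive f) (X (S k))); auto. apply df_cont.
Qed.

Lemma XY_T k y e : (forall j, (j <= k)%nat -> inP pa pb (Y j y e)) ->
  (forall j, (j < k)%nat -> in_elem d lambda (is j) (Nat.iter j (T d lambda f e) (x0 y, y))) ->
  Nat.iter k (T d lambda f e) (x0 y, y) = (X k y e, Y k y e).
Proof.
  induction k as [|k IH]; intros HP HE; [reflexivity|].
  simpl Nat.iter. rewrite IH by (intros; try apply HP; try apply HE; lia).
  assert (Hin : in_elem d lambda (is k) (X k y e, Y k y e)).
  { rewrite <- IH by (intros; try apply HP; try apply HE; lia). apply HE; lia. }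
  destruct Hin as [Hi HJ]. simpl in HJ.
  assert (PY : inP pa pb (Y k y e)) by (apply HP; lia).
  unfold T; simpl. rewrite (F_eq d lambda pa pb Hpos Hsum (Y k y e) (is k) (X k y e)); auto.
Qed.

End Curve.

Lemma iter_mul {A} (g : A -> A) x q : Nat.iter q g x = x -> forall N, Nat.iter (N * q) g x = x.
Proof.
  intros H N. induction N as [|N IH]; [reflexivity|].
  replace (S N * q)%nat with (q + N * q)%nat by lia. rewrite Nat.iter_add, IH; auto.
Qed.

Section Periodic.
Variables (d : nat) (lambda : nat -> R -> R) (pa pb : Rbar).
Hypothesis Hpos : forall i y, (i < d)%nat -> inP pa pb y -> 0 < lambda i y.
Hypothesis Hsum : forall y, inP pa pb y -> psum (fun i => lambda i y) d = 1.
Variables (y0 : R) (q : nat) (l r : R).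
Hypothesis Py0 : inP pa pb y0.
Hypothesis Hper : periodic_interval d lambda y0 q l r.

Let Fy := F d lambda y0.
Let c := (l + r) / 2.

Lemma props : periodic_interval_props d lambda y0 q l r.
Proof. apply Hper. Qed.

Lemma F_shift k : exists s, forall x, inI l r x -> Nat.iter k Fy x = x + s.
Proof.
  destruct props as [_ [_ [_ [_ HI]]]].
  induction k as [|k [s Hs]].
  - exists 0. intros; simpl; ring.
  - destruct (HI k) as [i [Hi HJ]]. exists (s + omega_ d lambda i y0).
    intros x Hx. simpl. unfold Fy at 1. rewrite (F_eq d lambda pa pb Hpos Hsum y0 i); auto.
    fold Fy. rewrite Hs; auto. ring.
Qed.

Lemma c_in : inI l r c.
Proof. destruct props as [Hlr _]. unfold inI, c; lra. Qed.

Lemma c_interior k : exists i, (i < d)%nat /\ a_ lambda i y0 < Nat.iter k Fy c < a_ lambda i y0 + lambda i y0.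
Proof.
  destruct props as [Hlr [_ [_ [_ HI]]]].
  destruct (HI k) as [i [Hi HJ]]. destruct (F_shift k) as [s Hs].
  exists i; split; auto.
  assert (Hl : inI l r l) by (unfold inI; lra).
  assert (Hm : inI l r ((c + r)/2)) by (unfold inI, c; lra).
  pose proof (HJ l Hl) as [J1 _]. pose proof (HJ _ Hm) as [_ J2].
  rewrite Hs in J1, J2 |- * by (auto; apply c_in). unfold c in *. lra.
Qed.

Lemma c_range k : 0 <= Nat.iter k Fy c < 1.
Proof.
  destruct (c_interior k) as [i [Hi [H1 H2]]].
  destruct (J_range d lambda pa pb Hpos Hsum y0 i (Nat.iter k Fy c) Py0 Hi) as [R1 [R2 _]];
  [unfold inJ; lra|]. lra.
Qed.

Lemma c_periodic : Nat.iter q Fy c = c.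
Proof.
  destruct props as [Hlr [Hq [Heq _]]].
  destruct (F_shift q) as [s Hs].
  assert (Hl : inI l r l) by (unfold inI; lra).
  destruct (proj1 (Heq l) Hl) as [x [Hx Ex]]. rewrite Hs in Ex by auto.
  assert (Hl2 : inI l r (Nat.iter q Fy l)) by (apply (proj2 (Heq _)); exists l; split; auto).
  rewrite Hs in Hl2 by auto. unfold inI in *.
  assert (s = 0) by lra. subst s. rewrite Hs by apply c_in. ring.
Qed.

Lemma c_minimal k : (0 < k < q)%nat -> Nat.iter k Fy c <> c.
Proof.
  intros Hk E. destruct props as [Hlr [Hq [Heq [Hmin _]]]].
  destruct (F_shift k) as [s Hs].
  rewrite Hs in E by apply c_in. assert (s = 0) by lra. subst s.
  apply (Hmin k Hk). intros z. split.
  - intros Hz. exists z; split; auto. fold Fy. rewrite Hs; auto; ring.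
  - intros [x [Hx Ex]]. fold Fy in Ex. rewrite Hs in Ex by auto. rewrite <- Ex. rewrite Rplus_0_r; auto.
Qed.

Lemma c_periodic_N N m : Nat.iter (N * q + m) Fy c = Nat.iter m Fy c.
Proof.
  rewrite Nat.add_comm, Nat.iter_add, iter_mul by apply c_periodic. reflexivity.
Qed.

Lemma preimage_orbit x n k0 : 0 <= x < 1 -> Nat.iter n Fy x = Nat.iter k0 Fy c ->
  forall k, (k <= n)%nat -> exists m, Nat.iter k Fy x = Nat.iter m Fy c.
Proof.
  intros Hx E k Hk. destruct props as [_ [Hq _]].
  exists (n * q + k0 - (n - k))%nat.
  apply (F_iter_inj d lambda pa pb Hpos Hsum y0 (n - k)); auto.
  - apply F_iter_range; auto.
  - apply c_range.
  - rewrite <- Nat.iter_add. replace (n - k + k)%nat with n by lia.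
    rewrite E, <- Nat.iter_add.
    replace (n - k + (n * q + k0 - (n - k)))%nat with (n * q + k0)%nat by nia.
    rewrite c_periodic_N. reflexivity.
Qed.

End Periodic.

Lemma chain {A} (Tm Sm : A -> A) g n :
  (forall m, (m < n)%nat -> Tm (Sm (Tm (Nat.iter m Tm g))) = Sm (Nat.iter m Tm g)) ->
  Nat.iter n Tm (Sm (Nat.iter n Tm g)) = Sm g.
Proof.
  induction n as [|n IH]; intros H; [reflexivity|].
  rewrite Nat.iter_succ_r. rewrite (Nat.iter_succ n). rewrite H by lia. apply IH. intros; apply H; lia.
Qed.

Lemma iter_mod {A} (Tm : A -> A) p q : (0 < q)%nat -> Nat.iter q Tm p = p ->
  forall k, Nat.iter k Tm p = Nat.iter (k mod q) Tm p.
Proof.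
  intros Hq E k. transitivity (Nat.iter (k mod q + (k / q) * q) Tm p).
  - f_equal. pose proof (Nat.div_mod_eq k q). lia.
  - rewrite Nat.iter_add. rewrite iter_mul; auto.
Qed.

Lemma sym_orbit {A} (Tm Sm : A -> A) p q a : (0 < q)%nat -> Nat.iter q Tm p = p ->
  (forall k, (k < q)%nat -> Tm (Sm (Tm (Nat.iter k Tm p))) = Sm (Nat.iter k Tm p)) ->
  Nat.iter a Tm (Sm p) = Tm p ->
  forall k, exists j, Sm (Nat.iter k Tm p) = Nat.iter j Tm p.
Proof.
  intros Hq Ep HT Ea.
  assert (R : forall m k, (k + m = q)%nat -> Sm (Nat.iter k Tm p) = Nat.iter m Tm (Sm (Nat.iter (k + m) Tm p))).
  { induction m as [|m IH]; intros k Hkm.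
    - rewrite Nat.add_0_r. reflexivity.
    - rewrite <- (HT k) by lia. change (Tm (Nat.iter k Tm p)) with (Nat.iter (S k) Tm p).
      rewrite (IH (S k)) by lia. replace (S k + m)%nat with (k + S m)%nat by lia.
      reflexivity. }
  assert (Sp : Sm p = Nat.iter q Tm (Sm p)).
  { pose proof (R q 0%nat ltac:(lia)) as E. simpl in E. rewrite Ep in E. exact E. }
  assert (Sp2 : Sm p = Nat.iter (a * q - a + 1) Tm p).
  { assert (E : Sm p = Nat.iter (a * q) Tm (Sm p)) by (symmetry; apply iter_mul; auto).
    assert (HN : (a * q = (a * q - a) + a)%nat) by nia.
    remember (a * q - a)%nat as N. rewrite E, HN, Nat.iter_add, Ea.
    rewrite Nat.iter_add. reflexivity. }
  intros k. rewrite (iter_mod Tm p q Hq Ep k).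
  pose proof (Nat.mod_upper_bound k q ltac:(lia)) as Hk.
  set (k' := (k mod q)%nat) in *.
  rewrite (R (q - k')%nat k') by lia. replace (k' + (q - k'))%nat with q by lia.
  rewrite Ep, Sp2, <- Nat.iter_add. eexists; reflexivity.
Qed.

Section TS.
Variables (d : nat) (lambda : nat -> R -> R) (pa pb : Rbar) (f : R -> R).
Hypothesis Hpos : forall i y, (i < d)%nat -> inP pa pb y -> 0 < lambda i y.
Hypothesis Hsum : forall y, inP pa pb y -> psum (fun i => lambda i y) d = 1.
Hypothesis Hfper : forall x, f (x + 1) = f x.
Hypothesis Hfodd : forall x, f (- x) = - f x.

Definition intP (p : R * R) : Prop := exists i, (i < d)%nat /\ inP pa pb (snd p) /\
  a_ lambda i (snd p) < fst p < a_ lambda i (snd p) + lambda i (snd p).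

Lemma f0 : f 0 = 0.
Proof. pose proof (Hfodd 0). rewrite Ropp_0 in H. lra. Qed.
Lemma f_half : f (1/2) = 0.
Proof. pose proof (Hfodd (1/2)). pose proof (Hfper (-(1/2))). replace (-(1/2) + 1) with (1/2) in H0 by lra. lra. Qed.
Lemma f_1m x : f (1 - x) = - f x.
Proof. rewrite <- Hfodd. rewrite <- (Hfper (- x)). f_equal. ring. Qed.

Lemma om_eq y i : inP pa pb y -> omega_ d lambda i y = 1 - 2 * a_ lambda i y - lambda i y.
Proof. intros; eapply omega_eq; eauto. Qed.

Lemma intP_range p : intP p -> 0 < fst p < 1.
Proof.
  intros [i [Hi [Py H]]].
  destruct (J_range d lambda pa pb Hpos Hsum (snd p) i (fst p) Py Hi) as [R1 [R2 _]]; [unfold inJ; lra|]. lra.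
Qed.

Lemma T_int e x y i : (i < d)%nat -> inP pa pb y -> inJ lambda i y x ->
  T d lambda f e (x, y) = (x + omega_ d lambda i y, y + e * f (x + omega_ d lambda i y)).
Proof. intros. unfold T; simpl. rewrite (F_eq d lambda pa pb Hpos Hsum y i x); auto. Qed.

Lemma TST e p : intP p -> T d lambda f e (Ssym f e (T d lambda f e p)) = Ssym f e p.
Proof.
  intros Hp. pose proof (intP_range p Hp) as Hr.
  destruct p as [x y]. destruct Hp as [i [Hi [Py H]]]. simpl in *.
  destruct (J_range d lambda pa pb Hpos Hsum y i x Py Hi) as [R1 [R2 R3]]; [unfold inJ; lra|].
  rewrite (T_int e x y i) by (auto; unfold inJ; lra).
  rewrite om_eq by auto.
  unfold Ssym; simpl.
  rewrite frac_neg by lra.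
  replace (y + e * f (x + (1 - 2 * a_ lambda i y - lambda i y)) - e * f (x + (1 - 2 * a_ lambda i y - lambda i y))) with y by ring.
  rewrite (T_int e _ _ i) by (auto; unfold inJ; lra).
  rewrite om_eq by auto. rewrite frac_neg by lra.
  replace (1 - (x + (1 - 2 * a_ lambda i y - lambda i y)) + (1 - 2 * a_ lambda i y - lambda i y)) with (1 - x) by ring.
  rewrite f_1m. f_equal. ring.
Qed.

Lemma S_invol e p : 0 <= fst p < 1 -> Ssym f e (Ssym f e p) = p.
Proof.
  destruct p as [x y]; simpl. intros Hx. unfold Ssym; simpl.
  destruct (Req_dec x 0) as [->|Hne].
  - rewrite frac_neg0, f0, frac_neg0. f_equal; ring.
  - rewrite (frac_neg x) by lra. rewrite Ropp_minus_distr.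
    replace (x - 1) with (- (1 - x)) by ring. rewrite frac_neg by lra.
    rewrite f_1m. f_equal; ring.
Qed.

Lemma S_zero e y : Ssym f e (0, y) = (0, y).
Proof. unfold Ssym; simpl. rewrite frac_neg0, f0. f_equal; ring. Qed.
Lemma S_half e y : Ssym f e (1/2, y) = (1/2, y).
Proof.
  unfold Ssym; simpl. rewrite frac_neg by lra. rewrite f_half. f_equal; [lra|ring].
Qed.
Lemma S_mid e y i : (i < d)%nat -> inP pa pb y ->
  Ssym f e (m_ lambda i y, y) = T d lambda f e (m_ lambda i y, y).
Proof.
  intros Hi Py. pose proof (Hpos i y Hi Py).
  destruct (J_range d lambda pa pb Hpos Hsum y i (m_ lambda i y) Py Hi) as [R1 [R2 R3]];
    [unfold inJ, m_; lra|].
  rewrite (T_int e _ _ i) by (auto; unfold inJ, m_; lra).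
  rewrite om_eq by auto. unfold Ssym, m_; simpl. rewrite frac_neg by lra.
  replace (a_ lambda i y + lambda i y / 2 + (1 - 2 * a_ lambda i y - lambda i y))
    with (1 - (a_ lambda i y + lambda i y / 2)) by field.
  rewrite f_1m. f_equal; try field; try ring.
Qed.

Lemma T_inj e x y x' y' : 0 <= x < 1 -> 0 <= x' < 1 -> inP pa pb y -> inP pa pb y' ->
  T d lambda f e (x, y) = T d lambda f e (x', y') -> (x, y) = (x', y').
Proof.
  intros Hx Hx' Py Py' E. unfold T in E; simpl in E. injection E as E1 E2.
  rewrite E1 in E2. assert (y = y') by lra. subst y'.
  f_equal. apply (F_inj d lambda pa pb Hpos Hsum y); auto.
Qed.

Lemma T0_iter k x y : Nat.iter k (T d lambda f 0) (x, y) = (Nat.iter k (F d lambda y) x, y).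
Proof.
  induction k as [|k IH]; [reflexivity|]. simpl. rewrite IH. unfold T; simpl. f_equal; ring.
Qed.

Lemma T_range e p k : (0 < k)%nat -> 0 <= fst (Nat.iter k (T d lambda f e) p) < 1.
Proof. intros Hk. destruct k; [lia|]. simpl. unfold T; simpl. apply F_range. Qed.

End TS.

Lemma continuous_pair (pe : R -> R * R) e :
  cont1 (fun e => fst (pe e)) e -> cont1 (fun e => snd (pe e)) e -> continuous pe e.
Proof.
  intros H1 H2. apply filterlim_locally. intros eps.
  destruct (H1 eps (cond_pos eps)) as [d1 [Hd1 K1]].
  destruct (H2 eps (cond_pos eps)) as [d2 [Hd2 K2]].
  apply locally_of_box. exists (Rmin d1 d2); split; [apply Rmin_pos; auto|].
  intros z Hz. pose proof (Rmin_l d1 d2); pose proof (Rmin_r d1 d2).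
  split; [apply K1|apply K2]; lra.
Qed.

Lemma choose_idx d (P : nat -> nat -> R -> R -> Prop) (ys : R) n : (0 < d)%nat ->
  (forall k, (k < n)%nat -> exists i del, 0 < del /\ forall y e, Rabs (y - ys) < del -> Rabs e < del ->
     (i < d)%nat /\ P k i y e) ->
  exists (is : nat -> nat) del, 0 < del /\ (forall k, (is k < d)%nat) /\
    forall k, (k < n)%nat -> forall y e, Rabs (y - ys) < del -> Rabs e < del -> P k (is k) y e.
Proof.
  intros Hd. induction n as [|n IH]; intros H.
  - exists (fun _ => 0%nat), 1. split; [lra|]. split; [auto|]. intros; lia.
  - destruct IH as [is [del [Hdel [His Hk]]]]; [intros; apply H; lia|].
    destruct (H n (Nat.lt_succ_diag_r n)) as [i [del' [Hdel' Hi]]].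
    assert (Hid : (i < d)%nat).
    { destruct (Hi ys 0) as [? _]; [rewrite Rminus_eq_0, Rabs_R0; lra|rewrite Rabs_R0; lra|auto]. }
    exists (fun k => if Nat.eq_dec k n then i else is k), (Rmin del del').
    split; [apply Rmin_pos; auto|]. split.
    + intros k. destruct (Nat.eq_dec k n); auto.
    + intros k Hkn y e Hy He. pose proof (Rmin_l del del'); pose proof (Rmin_r del del').
      destruct (Nat.eq_dec k n) as [->|Hne].
      * apply Hi; lra.
      * apply Hk; try lra; lia.
Qed.

Lemma cont2_distinct u1 v1 u2 v2 y e : cont2 u1 y e -> cont2 v1 y e -> cont2 u2 y e -> cont2 v2 y e ->
  (u1 y e, v1 y e) <> (u2 y e, v2 y e) ->
  exists del, 0 < del /\ forall y' e', Rabs (y' - y) < del -> Rabs (e' - e) < del ->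
    (u1 y' e', v1 y' e') <> (u2 y' e', v2 y' e').
Proof.
  intros C1 C2 C3 C4 Hne.
  set (g := fun y e => (u1 y e - u2 y e) * (u1 y e - u2 y e) + (v1 y e - v2 y e) * (v1 y e - v2 y e)).
  assert (Cg : cont2 g y e).
  { unfold g. apply cont2_plus; apply cont2_mult; apply cont2_minus; auto. }
  assert (Hg : 0 < g y e).
  { unfold g. destruct (Req_dec (u1 y e) (u2 y e)) as [E1|E1].
    - destruct (Req_dec (v1 y e) (v2 y e)) as [E2|E2].
      + exfalso; apply Hne; rewrite E1, E2; auto.
      + assert (0 < (v1 y e - v2 y e) * (v1 y e - v2 y e)).
        { apply Rsqr_pos_lt. lra. }
        rewrite E1, Rminus_eq_0. lra.
    - assert (0 < (u1 y e - u2 y e) * (u1 y e - u2 y e)) by (apply Rsqr_pos_lt; lra).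
      pose proof (Rle_0_sqr (v1 y e - v2 y e)). unfold Rsqr in *. lra. }
  destruct (cont2_pos g y e Cg Hg) as [del [Hd H]]. exists del; split; auto.
  intros y' e' Hy He E. specialize (H y' e' Hy He). unfold g in H.
  injection E as E1 E2. rewrite E1, E2, !Rminus_eq_0 in H. lra.
Qed.

Section Dyn.
Variables (d : nat) (lambda : nat -> R -> R) (pa pb : Rbar) (f : R -> R).
Hypothesis Hsm : forall i, (i < d)%nat -> smooth_on (inP pa pb) (lambda i).
Hypothesis Hpos : forall i y, (i < d)%nat -> inP pa pb y -> 0 < lambda i y.
Hypothesis Hsum : forall y, inP pa pb y -> psum (fun i => lambda i y) d = 1.
Hypothesis Hf : forall n x, ex_derive_n f n x.

Lemma P_open2 v y e : cont2 v y e -> inP pa pb (v y e) ->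
  exists del, 0 < del /\ forall y' e', Rabs (y' - y) < del -> Rabs (e' - e) < del -> inP pa pb (v y' e').
Proof.
  intros Cv Pv. destruct (inP_open _ _ _ Pv) as [d0 [Hd0 H0]].
  destruct (Cv d0 Hd0) as [d1 [Hd1 H1]]. exists d1; split; auto.
Qed.

Lemma int_open u v y e i : (i < d)%nat -> cont2 u y e -> cont2 v y e -> inP pa pb (v y e) ->
  a_ lambda i (v y e) < u y e < a_ lambda i (v y e) + lambda i (v y e) ->
  exists del, 0 < del /\ forall y' e', Rabs (y' - y) < del -> Rabs (e' - e) < del ->
    inP pa pb (v y' e') /\ a_ lambda i (v y' e') < u y' e' < a_ lambda i (v y' e') + lambda i (v y' e').
Proof.
  intros Hi Cu Cv Pv [I1 I2].
  destruct (P_open2 v y e Cv Pv) as [d0 [Hd0 H0]].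
  assert (Ca : cont1 (a_ lambda i) (v y e)) by (apply C1P_cont with (pa := pa) (pb := pb); auto; apply (C1_a d); auto; lia).
  assert (Cl : cont1 (lambda i) (v y e)) by (apply C1P_cont with (pa := pa) (pb := pb); auto; apply (C1_lambda d); auto).
  assert (C1 : cont2 (fun y e => u y e - a_ lambda i (v y e)) y e).
  { apply cont2_minus; auto. apply (cont2_comp (a_ lambda i) v); auto. }
  assert (C2 : cont2 (fun y e => a_ lambda i (v y e) + lambda i (v y e) - u y e) y e).
  { apply cont2_minus; auto. apply cont2_plus; [apply (cont2_comp (a_ lambda i) v)|apply (cont2_comp (lambda i) v)]; auto. }
  destruct (cont2_pos _ _ _ C1 ltac:(lra)) as [d1 [Hd1 K1]].
  destruct (cont2_pos _ _ _ C2 ltac:(lra)) as [d2 [Hd2 K2]].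
  exists (Rmin d0 (Rmin d1 d2)). split; [repeat apply Rmin_pos; auto|].
  intros y' e' Hy He. pose proof (Rmin_l d0 (Rmin d1 d2)); pose proof (Rmin_r d0 (Rmin d1 d2)).
  pose proof (Rmin_l d1 d2); pose proof (Rmin_r d1 d2).
  split; [apply H0; lra|]. specialize (K1 y' e' ltac:(lra) ltac:(lra)). specialize (K2 y' e' ltac:(lra) ltac:(lra)).
  lra.
Qed.

Lemma T_step u v y e i : (i < d)%nat -> cont2 u y e -> cont2 v y e -> inP pa pb (v y e) ->
  a_ lambda i (v y e) < u y e < a_ lambda i (v y e) + lambda i (v y e) ->
  cont2 (fun y e => fst (T d lambda f e (u y e, v y e))) y e /\
  cont2 (fun y e => snd (T d lambda f e (u y e, v y e))) y e.
Proof.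
  intros Hi Cu Cv Pv I.
  destruct (int_open u v y e i Hi Cu Cv Pv I) as [d0 [Hd0 H0]].
  assert (Eq : forall y' e', Rabs (y' - y) < d0 -> Rabs (e' - e) < d0 ->
    T d lambda f e' (u y' e', v y' e') = (u y' e' + omega_ d lambda i (v y' e'),
       v y' e' + e' * f (u y' e' + omega_ d lambda i (v y' e')))).
  { intros y' e' Hy He. destruct (H0 y' e' Hy He) as [P1 P2].
    apply (T_int d lambda pa pb f Hpos Hsum); auto. unfold inJ; lra. }
  assert (Co : cont1 (omega_ d lambda i) (v y e)) by (apply C1P_cont with (pa := pa) (pb := pb); auto; apply (C1_omega d); auto).
  assert (Cx : cont2 (fun y e => u y e + omega_ d lambda i (v y e)) y e).
  { apply cont2_plus; auto. apply (cont2_comp (omega_ d lambda i) v); auto. }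
  split.
  - apply cont2_ext with (h := fun y e => u y e + omega_ d lambda i (v y e)); auto.
    exists d0; split; auto. intros y' e' Hy He. rewrite Eq; auto.
  - apply cont2_ext with (h := fun y e => v y e + e * f (u y e + omega_ d lambda i (v y e))).
    { exists d0; split; auto. intros y' e' Hy He. rewrite Eq; auto. }
    apply cont2_plus; auto. apply (cont2_mult (fun _ e => e)); [apply cont2_e|].
    apply (cont2_comp f (fun y e => u y e + omega_ d lambda i (v y e))); auto.
    apply cont1_of_ex_derive. exact (Hf 1%nat _).
Qed.

End Dyn.

Definition dgam (lambda : nat -> R -> R) (c : curve) (y : R) : R :=
  match c with cur_mid i => Derive (m_ lambda i) y | _ => 0 end.

Lemma gamma_eq lambda c y : gamma lambda c y = (fst (gamma lambda c y), y).
Proof. destruct c; reflexivity. Qed.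

Section Pkg.
Variables (d : nat) (pa pb : Rbar) (lambda : nat -> R -> R) (f : R -> R)
  (y0 : R) (q : nat) (l r : R) (k0 : nat).
Hypothesis Hd : (2 <= d)%nat.
Hypothesis Hsm : forall i, (i < d)%nat -> smooth_on (inP pa pb) (lambda i).
Hypothesis Hpos : forall i y, (i < d)%nat -> inP pa pb y -> 0 < lambda i y.
Hypothesis Hsum : forall y, inP pa pb y -> psum (fun i => lambda i y) d = 1.
Hypothesis Hf : forall n x, ex_derive_n f n x.
Hypothesis Py0 : inP pa pb y0.
Hypothesis Hper : periodic_interval d lambda y0 q l r.

Let pstar := Nat.iter k0 (T d lambda f 0) ((l + r) / 2, y0).
Let T0 := T d lambda f 0.

Lemma pstar_eq : pstar = (Nat.iter k0 (F d lambda y0) ((l + r) / 2), y0).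
Proof. unfold pstar. apply T0_iter. Qed.

Variables (g : curve) (n : nat) (u : R).
Hypothesis Hv : valid_curve d g.
Hypothesis H0 : Nat.iter n T0 (gamma lambda g y0) = pstar.
Hypothesis Hloc : forall k, (k < n)%nat -> exists i del, 0 < del /\
     forall y e, Rabs (y - y0) < del -> Rabs e < del ->
       in_elem d lambda i (Nat.iter k (T d lambda f e) (gamma lambda g y)).
Hypothesis Hu : is_derive (fun y => fst (Nat.iter n T0 (gamma lambda g y))) y0 u.

Let x0 := fun y => fst (gamma lambda g y).
Let dx0 := dgam lambda g.

Lemma Hx0 : forall y, inP pa pb y -> is_derive x0 y (dx0 y) /\ cont1 x0 y /\ cont1 dx0 y.
Proof.
  intros y Py. unfold x0, dx0. destruct g as [| |i]; simpl.
  - split; [apply is_derive_eq with (l := zero); [apply (is_derive_const (K:=R_AbsRing) (V:=R_NormedModule))|reflexivity]|split; [apply cont1_const|unfold dgam; apply cont1_const]].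
  - split; [apply is_derive_eq with (l := zero); [apply (is_derive_const (K:=R_AbsRing) (V:=R_NormedModule))|reflexivity]|split; [apply cont1_const|unfold dgam; apply cont1_const]].
  - simpl in Hv. split; [|split].
    + apply C1P_derive with (pa := pa) (pb := pb); auto. apply (C1_m d); auto.
    + apply C1P_cont with (pa := pa) (pb := pb); auto. apply (C1_m d); auto.
    + unfold dgam. apply C1P_dcont with (pa := pa) (pb := pb); auto. apply (C1_m d); auto.
Qed.

Lemma x0_range : 0 <= x0 y0 < 1.
Proof.
  unfold x0. destruct g as [| |i]; simpl; try lra.
  simpl in Hv. pose proof (Hpos i y0 Hv Py0).
  destruct (J_range d lambda pa pb Hpos Hsum y0 i (m_ lambda i y0) Py0 Hv) as [R1 [R2 _]];
    [unfold inJ, m_; lra|]. unfold m_. lra.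
Qed.

Lemma pkg : exists (a1 a2 da1 da2 : R -> R -> R) (r0 : R), 0 < r0 /\
  (forall y e, Rabs (y - y0) < r0 -> Rabs e < r0 ->
     is_derive (fun z => a1 z e) y (da1 y e) /\ is_derive (fun z => a2 z e) y (da2 y e) /\
     cont2 a1 y e /\ cont2 a2 y e /\
     Nat.iter n (T d lambda f e) (gamma lambda g y) = (a1 y e, a2 y e) /\
     (forall m, (m < n)%nat -> intP d lambda pa pb (Nat.iter m (T d lambda f e) (gamma lambda g y))) /\
     inP pa pb y) /\
  cont2 da1 y0 0 /\ cont2 da2 y0 0 /\ da2 y0 0 = 1 /\ da1 y0 0 = u /\
  a1 y0 0 = fst pstar /\ a2 y0 0 = y0.
Proof.
  destruct (choose_idx d (fun k i y e => in_elem d lambda i (Nat.iter k (T d lambda f e) (gamma lambda g y))) y0 n)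
    as [is [D1 [HD1 [His Hin]]]]; [lia| |].
  { intros k Hk. destruct (Hloc k Hk) as [i [del [Hdel H]]]. exists i, del. split; auto.
    intros y e Hy He. specialize (H y e Hy He). split; auto. apply H. }
  set (Xf := X d lambda f x0 is). set (Yf := Y d lambda f x0 is).
  set (DXf := DX d lambda f x0 dx0 is). set (DYf := DY d lambda f x0 dx0 is).
  assert (Ybase : forall j, Yf j y0 0 = y0) by (intros; apply Y_e0).
  assert (Pbase : forall k j, (j <= k)%nat -> inP pa pb (Yf j y0 0)) by (intros; rewrite Ybase; auto).
  destruct (finite_min (fun j del => forall y e, Rabs (y - y0) < del -> Rabs (e - 0) < del -> inP pa pb (Yf j y e)) n)
    as [D2 [HD2 HP]].
  { intros j del del' H [H1 H2] y e Hy He. apply H; lra. }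
  { intros j Hj. apply P_open2.
    - apply (XY_cont d lambda pa pb f Hsm Hf x0 dx0 is Hx0 His j y0 0). intros; apply Pbase with j; auto.
    - rewrite Ybase; auto. }
  assert (EqT : forall k y e, (k <= n)%nat -> Rabs (y - y0) < Rmin D1 D2 -> Rabs e < Rmin D1 D2 ->
     Nat.iter k (T d lambda f e) (gamma lambda g y) = (Xf k y e, Yf k y e)).
  { intros k y e Hk Hy He. pose proof (Rmin_l D1 D2); pose proof (Rmin_r D1 D2).
    rewrite gamma_eq. apply (XY_T d lambda pa pb f Hpos Hsum x0 is k y e).
    - intros j Hj. apply HP; [lia| |rewrite Rminus_0_r]; lra.
    - intros j Hj. replace (x0 y, y) with (gamma lambda g y) by (apply gamma_eq). apply Hin; [lia| |]; lra. }
  assert (Fbase : forall k, (k <= n)%nat -> Xf k y0 0 = Nat.iter k (F d lambda y0) (x0 y0)).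
  { intros k Hk.
    assert (E := EqT k y0 0 Hk ltac:(rewrite Rminus_eq_0, Rabs_R0; apply Rmin_pos; auto)
                                 ltac:(rewrite Rabs_R0; apply Rmin_pos; auto)).
    rewrite gamma_eq in E. fold x0 in E. fold T0 in E. unfold T0 in E. rewrite T0_iter in E.
    injection E as E1 E2. auto. }
  assert (Hn_orbit : Nat.iter n (F d lambda y0) (x0 y0) = Nat.iter k0 (F d lambda y0) ((l + r) / 2)).
  { pose proof H0 as E. rewrite gamma_eq in E. fold x0 in E. unfold T0 in E. rewrite T0_iter in E.
    rewrite pstar_eq in E. injection E as E1. auto. }
  assert (IntBase : forall m, (m < n)%nat ->
     a_ lambda (is m) y0 < Xf m y0 0 < a_ lambda (is m) y0 + lambda (is m) y0).
  { intros m Hm.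
    destruct (preimage_orbit d lambda pa pb Hpos Hsum y0 q l r Py0 Hper (x0 y0) n k0 x0_range Hn_orbit m ltac:(lia))
      as [m' Hm'].
    destruct (c_interior d lambda pa pb Hpos Hsum y0 q l r Py0 Hper m') as [i [Hi Hint]].
    assert (Hinm : in_elem d lambda (is m) (Xf m y0 0, Yf m y0 0)).
    { rewrite <- EqT by (try lia; rewrite ?Rminus_eq_0, ?Rabs_R0; apply Rmin_pos; auto).
      apply Hin; auto; rewrite ?Rminus_eq_0, ?Rabs_R0; auto. }
    destruct Hinm as [Hism HJ]. simpl in HJ. rewrite Ybase in HJ.
    rewrite Fbase in HJ |- * by lia. rewrite Hm' in HJ |- *.
    assert (is m = i).
    { apply (J_disj d lambda pa pb Hpos y0 (is m) i (Nat.iter m' (F d lambda y0) ((l + r) / 2))); auto.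
      unfold inJ; lra. }
    subst i. auto. }
  destruct (finite_min (fun m del => (m < n)%nat -> forall y e, Rabs (y - y0) < del -> Rabs (e - 0) < del ->
      inP pa pb (Yf m y e) /\ a_ lambda (is m) (Yf m y e) < Xf m y e < a_ lambda (is m) (Yf m y e) + lambda (is m) (Yf m y e)) n)
    as [D3 [HD3 HI]].
  { intros j del del' H [H1 H2] Hj y e Hy He. apply H; auto; lra. }
  { intros m Hm. destruct (le_lt_dec n m) as [Hle|Hlt].
    - exists 1. split; [lra|]. intros; lia.
    - destruct (XY_cont d lambda pa pb f Hsm Hf x0 dx0 is Hx0 His m y0 0) as [CX [CY _]];
        [intros; apply Pbase with m; auto|].
      destruct (int_open d lambda pa pb Hsm (Xf m) (Yf m) y0 0 (is m) (His m) CX CY) as [del [Hdel H]].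
      + rewrite Ybase; auto.
      + rewrite Ybase. apply IntBase; auto.
      + exists del; split; auto. }
  set (r0 := Rmin (Rmin D1 D2) D3).
  assert (Hr0 : 0 < r0) by (unfold r0; repeat apply Rmin_pos; auto).
  assert (Hr0a : r0 <= Rmin D1 D2 /\ r0 <= D3 /\ r0 <= D2).
  { unfold r0. pose proof (Rmin_l (Rmin D1 D2) D3). pose proof (Rmin_r (Rmin D1 D2) D3).
    pose proof (Rmin_r D1 D2). lra. }
  destruct Hr0a as [R1 [R2 R3]].
  exists (Xf n), (Yf n), (DXf n), (DYf n), r0. split; auto.
  assert (PB : forall y e, Rabs (y - y0) < r0 -> Rabs e < r0 -> forall j, (j <= n)%nat -> inP pa pb (Yf j y e)).
  { intros y e Hy He j Hj. apply HP; [lia| |rewrite Rminus_0_r]; lra. }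
  split.
  - intros y e Hy He.
    destruct (XY_deriv d lambda pa pb f Hsm Hf x0 dx0 is Hx0 His n y e (PB y e Hy He)) as [Dx Dy].
    destruct (XY_cont d lambda pa pb f Hsm Hf x0 dx0 is Hx0 His n y e (PB y e Hy He)) as [CX [CY _]].
    split; auto. split; auto. split; auto. split; auto. split; [apply EqT; auto; lra|]. split.
    + intros m Hm. rewrite EqT by (auto; lia || lra).
      destruct (HI m ltac:(lia) Hm y e ltac:(lra) ltac:(rewrite Rminus_0_r; lra)) as [P1 P2].
      exists (is m). split; auto.
    + pose proof (PB y e Hy He 0%nat ltac:(lia)). auto.
  - destruct (XY_cont d lambda pa pb f Hsm Hf x0 dx0 is Hx0 His n y0 0) as [CX [CY [CDX CDY]]];
      [intros; apply Pbase with n; auto|].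
    split; auto. split; auto. split; [apply DY_e0|].
    split.
    + destruct (XY_deriv d lambda pa pb f Hsm Hf x0 dx0 is Hx0 His n y0 0) as [Dx _];
        [intros; apply Pbase with n; auto|].
      assert (Hu' : is_derive (fun z => Xf n z 0) y0 u).
      { apply is_derive_ext_loc with (f := fun y => fst (Nat.iter n T0 (gamma lambda g y))); auto.
        apply locally_of_box. exists r0. split; auto. intros z Hz.
        unfold T0. rewrite EqT; auto; try lra. rewrite Rabs_R0; lra. }
      apply is_derive_unique in Dx. apply is_derive_unique in Hu'. unfold DXf. rewrite <- Dx. exact Hu'.
    + split; [|apply Y_e0].
      rewrite <- H0. unfold T0. rewrite EqT; auto; rewrite ?Rminus_eq_0, ?Rabs_R0; lra.
Qed.
End Pkg.

Definition aval (c : curve) (n : nat) : nat :=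
  match c with cur_mid _ => (2 * n)%nat | _ => (2 * n + 1)%nat end.

Lemma aval_jval c n : Z.of_nat (aval c n) = (jval c n + 1)%Z.
Proof. destruct c; unfold aval, jval; lia. Qed.

Section Main.
Variables (d : nat) (pa pb : Rbar) (lambda : nat -> R -> R) (f : R -> R)
  (y0 : R) (q : nat) (l r : R) (gA gB : curve) (nA nB : nat) (k0 : nat).
Hypothesis Hd : (2 <= d)%nat.
Hypothesis Hsm : forall i, (i < d)%nat -> smooth_on (inP pa pb) (lambda i).
Hypothesis Hpos : forall i y, (i < d)%nat -> inP pa pb y -> 0 < lambda i y.
Hypothesis Hsum : forall y, inP pa pb y -> psum (fun i => lambda i y) d = 1.
Hypothesis Hf : forall n x, ex_derive_n f n x.
Hypothesis Hfper : forall x, f (x + 1) = f x.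
Hypothesis Hfodd : forall x, f (- x) = - f x.
Hypothesis Py0 : inP pa pb y0.
Hypothesis Hper : periodic_interval d lambda y0 q l r.

Let T0 := T d lambda f 0.
Let pstar := Nat.iter k0 T0 ((l + r) / 2, y0).

Lemma curve_rel (c : curve) (n : nat) (e y : R) : valid_curve d c -> inP pa pb y ->
  (forall m, (m < n)%nat -> intP d lambda pa pb (Nat.iter m (T d lambda f e) (gamma lambda c y))) ->
  Nat.iter (aval c n) (T d lambda f e) (Ssym f e (Nat.iter n (T d lambda f e) (gamma lambda c y))) =
  T d lambda f e (Nat.iter n (T d lambda f e) (gamma lambda c y)).
Proof.
  intros Hv Py Hint.
  assert (Ch := chain (T d lambda f e) (Ssym f e) (gamma lambda c y) n
     (fun m Hm => TST d lambda pa pb f Hpos Hsum Hfper Hfodd e _ (Hint m Hm))).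
  destruct c as [| |i]; unfold aval.
  - replace (2 * n + 1)%nat with ((n + 1) + n)%nat by lia. rewrite Nat.iter_add, Ch.
    simpl gamma. rewrite S_zero by auto. rewrite Nat.add_comm. reflexivity.
  - replace (2 * n + 1)%nat with ((n + 1) + n)%nat by lia. rewrite Nat.iter_add, Ch.
    simpl gamma. rewrite S_half by auto. rewrite Nat.add_comm. reflexivity.
  - simpl in Hv. replace (2 * n)%nat with (n + n)%nat by lia. rewrite Nat.iter_add, Ch.
    simpl gamma. rewrite (S_mid d lambda pa pb f Hpos Hsum Hfper Hfodd e y i Hv Py).
    apply Nat.iter_swap.
Qed.

Lemma snd_T0 c n y : snd (Nat.iter n T0 (gamma lambda c y)) = y.
Proof. rewrite gamma_eq. unfold T0. rewrite T0_iter. reflexivity. Qed.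

Lemma snd_deriv c n u : is_derive (fun y => snd (Nat.iter n T0 (gamma lambda c y))) y0 u -> u = 1.
Proof.
  intros H. apply is_derive_ext with (g := fun y => y) in H; [|intros; apply snd_T0].
  apply is_derive_unique in H. rewrite <- H. apply Derive_id.
Qed.

Lemma pstar_eq' : pstar = (Nat.iter k0 (F d lambda y0) ((l + r) / 2), y0).
Proof. unfold pstar, T0. apply T0_iter. Qed.

Lemma orbit_base k : Nat.iter k T0 pstar = (Nat.iter (k + k0) (F d lambda y0) ((l + r) / 2), y0).
Proof. rewrite pstar_eq'. unfold T0. rewrite T0_iter, Nat.iter_add. reflexivity. Qed.

Lemma orbit_int k : intP d lambda pa pb (Nat.iter k T0 pstar).
Proof.
  rewrite orbit_base. destruct (c_interior d lambda pa pb Hpos Hsum y0 q l r Py0 Hper (k + k0)) as [i [Hi H]].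
  exists i. simpl. auto.
Qed.

Lemma orbit_distinct k : (0 < k < q)%nat -> Nat.iter k T0 pstar <> pstar.
Proof.
  intros Hk E. rewrite orbit_base, pstar_eq' in E. injection E as E.
  apply (c_minimal d lambda pa pb Hpos Hsum y0 q l r Py0 Hper k Hk).
  apply (F_iter_inj d lambda pa pb Hpos Hsum y0 k0); auto.
  - apply (c_range d lambda pa pb Hpos Hsum y0 q l r Py0 Hper k).
  - apply (c_range d lambda pa pb Hpos Hsum y0 q l r Py0 Hper 0).
  - rewrite <- !Nat.iter_add. rewrite Nat.add_comm. auto.
Qed.


Lemma main_sec :
  valid_curve d gA -> valid_curve d gB ->
  Z.abs (jval gA nA - jval gB nB) = Z.of_nat q ->
  Nat.iter nA T0 (gamma lambda gA y0) = pstar ->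
  Nat.iter nB T0 (gamma lambda gB y0) = pstar ->
  (forall k, (k < nA)%nat -> exists i delta, 0 < delta /\
     forall y e, Rabs (y - y0) < delta -> Rabs e < delta ->
       in_elem d lambda i (Nat.iter k (T d lambda f e) (gamma lambda gA y))) ->
  (forall k, (k < nB)%nat -> exists i delta, 0 < delta /\
     forall y e, Rabs (y - y0) < delta -> Rabs e < delta ->
       in_elem d lambda i (Nat.iter k (T d lambda f e) (gamma lambda gB y))) ->
  (exists uA1 uA2 uB1 uB2,
     is_derive (fun y => fst (Nat.iter nA T0 (gamma lambda gA y))) y0 uA1 /\
     is_derive (fun y => snd (Nat.iter nA T0 (gamma lambda gA y))) y0 uA2 /\
     is_derive (fun y => fst (Nat.iter nB T0 (gamma lambda gB y))) y0 uB1 /\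
     is_derive (fun y => snd (Nat.iter nB T0 (gamma lambda gB y))) y0 uB2 /\
     (forall s t, s * uA1 + t * uB1 = 0 -> s * uA2 + t * uB2 = 0 -> s = 0 /\ t = 0)) ->
  exists eps0 dA dB (U : R * R -> Prop) (pe : R -> R * R),
    0 < eps0 /\ 0 < dA /\ 0 < dB /\ locally pstar U /\
    pe 0 = pstar /\
    forall e, Rabs e < eps0 ->
      continuous pe e /\
      U (pe e) /\
      (exists y, Rabs (y - y0) < dA /\ pe e = Nat.iter nA (T d lambda f e) (gamma lambda gA y)) /\
      (exists y, Rabs (y - y0) < dB /\ pe e = Nat.iter nB (T d lambda f e) (gamma lambda gB y)) /\
      (forall p, U p ->
         (exists y, Rabs (y - y0) < dA /\ p = Nat.iter nA (T d lambda f e) (gamma lambda gA y)) ->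
         (exists y, Rabs (y - y0) < dB /\ p = Nat.iter nB (T d lambda f e) (gamma lambda gB y)) ->
         p = pe e) /\
      sym_periodic_orbit (T d lambda f e) (Ssym f e) (inP pa pb) q (pe e).
Proof.
  intros HvA HvB Hj HA0 HB0 HlocA HlocB Hder.
  destruct Hder as [uA1 [uA2 [uB1 [uB2 [DA1 [DA2 [DB1 [DB2 Hind]]]]]]]].
  apply snd_deriv in DA2. apply snd_deriv in DB2.
  assert (Hne : uA1 <> uB1).
  { intros E. destruct (Hind 1 (-1)) as [H1 _]; [rewrite E; ring|rewrite DA2, DB2; ring|lra]. }
  destruct (pkg d pa pb lambda f y0 q l r k0 Hd Hsm Hpos Hsum Hf Py0 Hper gA nA uA1 HvA HA0 HlocA DA1)
    as [a1 [a2 [da1 [da2 [rA [HrA [BoxA [CA1 [CA2 [EA2 [EA1 [A10 A20]]]]]]]]]]]].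
  destruct (pkg d pa pb lambda f y0 q l r k0 Hd Hsm Hpos Hsum Hf Py0 Hper gB nB uB1 HvB HB0 HlocB DB1)
    as [b1 [b2 [db1 [db2 [rB [HrB [BoxB [CB1 [CB2 [EB2 [EB1 [B10 B20]]]]]]]]]]]].
  set (r0 := Rmin rA rB).
  assert (Hr0 : 0 < r0) by (apply Rmin_pos; auto).
  assert (Hr0A : r0 <= rA) by apply Rmin_l. assert (Hr0B : r0 <= rB) by apply Rmin_r.
  destruct (core_full a1 a2 b1 b2 da1 da2 db1 db2 y0 y0 r0 r0 Hr0 Hr0) as
    [eps1 [dA [dB [y1 [y2 [He1 [He1r [HdA [HdAr [HdB [HdBr [Y10 [Y20 HC]]]]]]]]]]]]].
  { intros y e Hy He. destruct (BoxA y e) as [X1 [X2 [X3 [X4 _]]]]; try lra. auto. }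
  { intros y e Hy He. destruct (BoxB y e) as [X1 [X2 [X3 [X4 _]]]]; try lra. auto. }
  all: auto.
  { rewrite EA1, EB1; auto. }
  { rewrite A10, B10; auto. }
  { rewrite A20, B20; auto. }
  set (pe := fun e => (a1 (y1 e) e, a2 (y1 e) e)).
  assert (Hpe0 : pe 0 = pstar).
  { unfold pe. rewrite Y10, A10, A20, T0_iter, pstar_eq'. reflexivity. }
  assert (Hpec : forall e, Rabs e < eps1 -> cont1 (fun e => fst (pe e)) e /\ cont1 (fun e => snd (pe e)) e).
  { intros e He. destruct (HC e He) as [Hy1 [_ [_ [_ [_ Hc]]]]].
    destruct (BoxA (y1 e) e) as [_ [_ [C1 [C2 _]]]]; try lra.
    split; [apply (cont1_comp_e a1 y1 e)|apply (cont1_comp_e a2 y1 e)]; auto. }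
  set (G := fun k e => Nat.iter k (T d lambda f e) (pe e)).
  assert (HG : forall k, cont2 (fun _ e => fst (G k e)) 0 0 /\ cont2 (fun _ e => snd (G k e)) 0 0 /\
     G k 0 = Nat.iter k T0 pstar).
  { induction k as [|k [IH1 [IH2 IH3]]].
    - destruct (Hpec 0 ltac:(rewrite Rabs_R0; lra)) as [P1 P2].
      split; [apply (cont2_of_cont1 (fun e => fst (pe e)))|split; [apply (cont2_of_cont1 (fun e => snd (pe e)))|]]; auto.
    - destruct (orbit_int k) as [i [Hi [HP HI]]].
      rewrite <- IH3 in HP, HI.
      destruct (T_step d lambda pa pb f Hsm Hpos Hsum Hf (fun _ e => fst (G k e)) (fun _ e => snd (G k e)) 0 0 i Hi IH1 IH2 HP HI)
        as [S1 S2].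
      split; [|split].
      + apply cont2_ext with (h := fun y e => fst (T d lambda f e (fst (G k e), snd (G k e)))); auto.
        exists 1; split; [lra|]. intros. rewrite <- surjective_pairing. reflexivity.
      + apply cont2_ext with (h := fun y e => snd (T d lambda f e (fst (G k e), snd (G k e)))); auto.
        exists 1; split; [lra|]. intros. rewrite <- surjective_pairing. reflexivity.
      + change (T d lambda f 0 (G k 0) = T0 (Nat.iter k T0 pstar)). rewrite IH3. reflexivity. }
  destruct (finite_min (fun k del => forall e, Rabs (e - 0) < del -> intP d lambda pa pb (G k e)) q) as [D1 [HD1 HI]].
  { intros j del del' H [H1 H2] e He. apply H; lra. }
  { intros k Hk. destruct (HG k) as [C1 [C2 C3]].
    destruct (orbit_int k) as [i [Hi [HP HI]]]. rewrite <- C3 in HP, HI.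
    destruct (int_open d lambda pa pb Hsm (fun _ e => fst (G k e)) (fun _ e => snd (G k e)) 0 0 i Hi C1 C2 HP HI)
      as [del [Hdel H]].
    exists del; split; auto. intros e He. destruct (H 0 e) as [P1 P2]; [rewrite Rminus_eq_0, Rabs_R0; lra|auto|].
    exists i. auto. }
  destruct (finite_min (fun k del => (0 < k < q)%nat -> forall e, Rabs (e - 0) < del -> G k e <> G 0%nat e) q) as [D2 [HD2 HDist]].
  { intros j del del' H [H1 H2] Hjq e He. apply H; auto; lra. }
  { intros k Hk. destruct (lt_dec 0 k) as [Hk0|Hk0]; [destruct (lt_dec k q) as [Hkq|Hkq]|].
    2,3: exists 1; split; [lra|]; intros; lia.
    destruct (HG k) as [C1 [C2 C3]]. destruct (HG 0%nat) as [C4 [C5 C6]].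
    destruct (cont2_distinct (fun _ e => fst (G k e)) (fun _ e => snd (G k e)) (fun _ e => fst (G 0%nat e)) (fun _ e => snd (G 0%nat e)) 0 0 C1 C2 C4 C5)
      as [del [Hdel H]].
    - rewrite <- !surjective_pairing, C3, C6. simpl. apply orbit_distinct; lia.
    - exists del; split; auto. intros _ e He E. apply (H 0 e); [rewrite Rminus_eq_0, Rabs_R0; lra|auto|].
      rewrite <- !surjective_pairing. auto. }
  set (eps0 := Rmin eps1 (Rmin D1 D2)).
  assert (Heps0 : 0 < eps0) by (unfold eps0; repeat apply Rmin_pos; auto).
  assert (Heps0a : eps0 <= eps1 /\ eps0 <= D1 /\ eps0 <= D2).
  { unfold eps0. pose proof (Rmin_l eps1 (Rmin D1 D2)). pose proof (Rmin_r eps1 (Rmin D1 D2)).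
    pose proof (Rmin_l D1 D2). pose proof (Rmin_r D1 D2). lra. }
  destruct Heps0a as [E1 [E2 E3]].
  pose proof (props d lambda y0 q l r Hper) as [_ [Hq _]].
  exists eps0, dA, dB, (fun _ => True), pe.
  split; auto. split; auto. split; auto. split; [apply filter_true|]. split; auto.
  intros e He.
  destruct (HC e ltac:(lra)) as [Hy1 [Hy2 [Eab1 [Eab2 [Huniq Hc]]]]].
  destruct (BoxA (y1 e) e) as [_ [_ [_ [_ [ItA [IntA PyA]]]]]]; try lra.
  destruct (BoxB (y2 e) e) as [_ [_ [_ [_ [ItB [IntB PyB]]]]]]; try lra.
  assert (PeA : pe e = Nat.iter nA (T d lambda f e) (gamma lambda gA (y1 e))) by (rewrite ItA; reflexivity).
  assert (PeB : pe e = Nat.iter nB (T d lambda f e) (gamma lambda gB (y2 e))) by (rewrite ItB, <- Eab1, <- Eab2; reflexivity).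
  split; [destruct (Hpec e ltac:(lra)); apply continuous_pair; auto|].
  split; [exact I|].
  split; [exists (y1 e); split; auto|].
  split; [exists (y2 e); split; auto|].
  split.
  { intros p _ [y [Hy Ep]] [y' [Hy' Ep']].
    destruct (BoxA y e) as [_ [_ [_ [_ [ItA' _]]]]]; try lra.
    destruct (BoxB y' e) as [_ [_ [_ [_ [ItB' _]]]]]; try lra.
    rewrite ItA' in Ep. rewrite ItB' in Ep'. rewrite Ep in Ep'. injection Ep' as F1 F2.
    destruct (Huniq y y' Hy Hy' F1 F2) as [-> _]. rewrite Ep. reflexivity. }
  set (Te := T d lambda f e). set (Se := Ssym f e). set (p := pe e).
  assert (IntG : forall k, (k <= q)%nat -> intP d lambda pa pb (Nat.iter k Te p)).
  { intros k Hk. apply (HI k Hk). rewrite Rminus_0_r. lra. }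
  assert (relA : Nat.iter (aval gA nA) Te (Se p) = Te p).
  { unfold p, Te, Se. rewrite PeA. apply curve_rel; auto. }
  assert (relB : Nat.iter (aval gB nB) Te (Se p) = Te p).
  { unfold p, Te, Se. rewrite PeB. apply curve_rel; auto. }
  assert (Hab : (aval gA nA = aval gB nB + q)%nat \/ (aval gB nB = aval gA nA + q)%nat).
  { pose proof (aval_jval gA nA). pose proof (aval_jval gB nB). lia. }
  assert (Hrng : forall k, (k <= q)%nat -> 0 <= fst (Nat.iter k Te p) < 1 /\ inP pa pb (snd (Nat.iter k Te p))).
  { intros k Hk. destruct (IntG k Hk) as [i [Hi [HP HI']]].
    pose proof (intP_range d lambda pa pb Hpos Hsum _ (IntG k Hk)). split; [lra|auto]. }
  assert (Hper_p : Nat.iter q Te p = p).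
  { assert (E : Te (Nat.iter q Te p) = Te p).
    { rewrite <- Nat.iter_swap.
      destruct Hab as [Hab|Hab].
      - transitivity (Nat.iter (aval gA nA) Te (Se p)); [|exact relA].
        rewrite Hab, Nat.add_comm, Nat.iter_add, relB. reflexivity.
      - transitivity (Nat.iter (aval gB nB) Te (Se p)); [|exact relB].
        rewrite Hab, Nat.add_comm, Nat.iter_add, relA. reflexivity. }
    destruct (Hrng q (le_n _)) as [R1 R2]. destruct (Hrng 0%nat ltac:(lia)) as [R3 R4].
    rewrite (surjective_pairing (Nat.iter q Te p)) in E |- *.
    rewrite (surjective_pairing p) in E |- *.
    apply (T_inj d lambda pa pb f Hpos Hsum e); auto. }
  assert (Hmod : forall k, Nat.iter k Te p = Nat.iter (k mod q) Te p) by (apply iter_mod; auto).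
  assert (Hmodb : forall k, ((k mod q) <= q)%nat) by (intros; pose proof (Nat.mod_upper_bound k q); lia).
  assert (Hsym : forall k, exists j, Se (Nat.iter k Te p) = Nat.iter j Te p).
  { apply (sym_orbit Te Se p q (aval gA nA)); auto.
    intros k Hk. apply (TST d lambda pa pb f Hpos Hsum Hfper Hfodd e). apply IntG; lia. }
  split; [auto|]. split; [auto|]. split.
  { intros k Hk. unfold p. fold (G k e). apply (HDist k); auto; [lia|rewrite Rminus_0_r; lra]. }
  split.
  { intros k. rewrite Hmod. apply Hrng; auto. }
  split; auto.
  intros k. destruct (Hsym k) as [j Hj']. exists j. rewrite <- Hj'.
  symmetry. apply S_invol; auto. rewrite Hmod. apply Hrng; auto.
Qed.

End Main.

Theorem mainTheorem12
  (d : nat) (pa pb : Rbar) (lambda : nat -> R -> R) (f : R -> R)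
  (y0 : R) (q : nat) (l r : R) (gA gB : curve) (nA nB : nat)
  (yA yB : R) (pstar : R * R) :
  (2 <= d)%nat ->
  Rbar_lt pa pb ->
  (forall i, (i < d)%nat -> smooth_on (inP pa pb) (lambda i)) ->
  (forall i y, (i < d)%nat -> inP pa pb y -> 0 < lambda i y) ->
  (forall y, inP pa pb y -> psum (fun i => lambda i y) d = 1) ->
  (forall n x, ex_derive_n f n x) ->
  (forall x, f (x + 1) = f x) ->
  (forall x, f (- x) = - f x) ->
  inP pa pb y0 ->
  periodic_interval d lambda y0 q l r ->
  valid_curve d gA -> valid_curve d gB ->
  Z.abs (jval gA nA - jval gB nB) = Z.of_nat q ->
  inP pa pb yA -> inP pa pb yB ->
  (exists k, (k < q)%nat /\ pstar = Nat.iter k (T d lambda f 0) ((l + r) / 2, y0)) ->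
  Nat.iter nA (T d lambda f 0) (gamma lambda gA yA) = pstar ->
  Nat.iter nB (T d lambda f 0) (gamma lambda gB yB) = pstar ->
  (forall k, (k < nA)%nat -> exists i delta, 0 < delta /\
     forall y e, Rabs (y - yA) < delta -> Rabs e < delta ->
       in_elem d lambda i (Nat.iter k (T d lambda f e) (gamma lambda gA y))) ->
  (forall k, (k < nB)%nat -> exists i delta, 0 < delta /\
     forall y e, Rabs (y - yB) < delta -> Rabs e < delta ->
       in_elem d lambda i (Nat.iter k (T d lambda f e) (gamma lambda gB y))) ->
  (exists uA1 uA2 uB1 uB2,
     is_derive (fun y => fst (Nat.iter nA (T d lambda f 0) (gamma lambda gA y))) yA uA1 /\
     is_derive (fun y => snd (Nat.iter nA (T d lambda f 0) (gamma lambda gA y))) yA uA2 /\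
     is_derive (fun y => fst (Nat.iter nB (T d lambda f 0) (gamma lambda gB y))) yB uB1 /\
     is_derive (fun y => snd (Nat.iter nB (T d lambda f 0) (gamma lambda gB y))) yB uB2 /\
     (forall s t, s * uA1 + t * uB1 = 0 -> s * uA2 + t * uB2 = 0 -> s = 0 /\ t = 0)) ->
  exists eps0 dA dB (U : R * R -> Prop) (pe : R -> R * R),
    0 < eps0 /\ 0 < dA /\ 0 < dB /\ locally pstar U /\
    pe 0 = pstar /\
    forall e, Rabs e < eps0 ->
      continuous pe e /\
      U (pe e) /\
      (exists y, Rabs (y - yA) < dA /\ pe e = Nat.iter nA (T d lambda f e) (gamma lambda gA y)) /\
      (exists y, Rabs (y - yB) < dB /\ pe e = Nat.iter nB (T d lambda f e) (gamma lambda gB y)) /\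
      (forall p, U p ->
         (exists y, Rabs (y - yA) < dA /\ p = Nat.iter nA (T d lambda f e) (gamma lambda gA y)) ->
         (exists y, Rabs (y - yB) < dB /\ p = Nat.iter nB (T d lambda f e) (gamma lambda gB y)) ->
         p = pe e) /\
      sym_periodic_orbit (T d lambda f e) (Ssym f e) (inP pa pb) q (pe e).
Proof.
  intros Hd Hpapb Hsm Hpos Hsum Hf Hfper Hfodd Py0 Hper HvA HvB Hj PyA PyB [k0 [Hk0 Ep]] HA0 HB0 HlocA HlocB Hder.
  assert (EyA : yA = y0).
  { pose proof (f_equal snd HA0) as E. rewrite (snd_T0 d lambda f) in E. rewrite E, Ep, T0_iter. reflexivity. }
  assert (EyB : yB = y0).
  { pose proof (f_equal snd HB0) as E. rewrite (snd_T0 d lambda f) in E. rewrite E, Ep, T0_iter. reflexivity. }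
  subst yA yB pstar.
  apply (main_sec d pa pb lambda f y0 q l r gA gB nA nB k0); auto.
Qed.
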